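(* In the line network model (see context), assume a unique worst link: there is $m$ with $p_m=\max_i p_i<1$ and $p_i<p_m$ for $i\ne m$, and let $A:=1-p_m$. Then $\mathbb{E}R_t=A\,t-r(t)$ where the function $r$ is bounded uniformly in $t\ge0$ and $n\ge1$, and consequently $\mathbb{E}T_n=\frac{n}{A}+O(1)$ as $n\to\infty$.
   Context: Line network model. Fix integers $\ell\ge1$, $n\ge1$ and erasure probabilities $p_1,\dots,p_\ell\in[0,1)$. Let $\{z_{t,i}\}$ be independent Bernoulli variables with $\mathbb{P}(z_{t,i}=1)=1-p_i$. The rank $\rho_i(t)$ of node $N^{(i)}$ after $t$ steps satisfies $\rho_1(t)=n$, $\rho_i(0)=0$ for $i\ge2$, and $\rho_{i+1}(t)=\rho_{i+1}(t-1)+z_{t,i}\mathbf 1\{\rho_i(t-1)>\rho_{i+1}(t-1)\}$. $R_t:=\rho_{\ell+1}(t)$ and $T_n:=\min\{t:\rho_{\ell+1}(t)=n\}$. Here the bound on $r(t)$ is meant in the regime before the source packets are exhausted, i.e. with the source treated as having an unlimited supply of packets (as $n\to\infty$). *)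

(* Defs.v *)
From Stdlib Require Import Reals Arith List Bool.
Import ListNotations.
Open Scope R_scope.

(* A configuration of the erasure variables: z t i = true  iff  z_{t,i} = 1
   (packet on link i at step t is NOT erased), which has probability 1 - p_i. *)
Definition config := nat -> nat -> bool.

(* Source supply: [Some n] = the source holds n packets (rho_1(t) = n);
   [None] = unlimited supply (rho_1 = +infinity). *)
Definition src_gt (src : option nat) (k : nat) : bool :=
  match src with Some n => Nat.ltb k n | None => true end.

(* rho src z t i = rank of node N^(i) after t steps, for i >= 2:
   rho_{i}(t) = rho_{i}(t-1) + z_{t,i-1} 1{rho_{i-1}(t-1) > rho_{i}(t-1)},
   rho_i(0) = 0, and rho_1 is the source rank. *)
Fixpoint rho (src : option nat) (z : config) (t i : nat) : nat :=
  match t with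
  | O => O
  | S t' =>
      let prev := rho src z t' i in
      let can := if Nat.eqb i 2 then src_gt src prev
                 else Nat.ltb prev (rho src z t' (i - 1)) in
      (prev + (if z t (i - 1) && can then 1 else 0))%nat
  end.

Definition Rt (l : nat) (src : option nat) (z : config) (t : nat) : nat :=
  rho src z t (S l).

Definition upd (z : config) (s i : nat) (b : bool) : config :=
  fun s' i' => if Nat.eqb s' s && Nat.eqb i' i then b else z s' i'.

(* Expectation, under independent Bernoulli(1 - p_i) variables z_{s,i} for the
   (distinct) cells (s,i) in the list, of a random variable X depending only
   on those cells. *)
Fixpoint Exp (p : nat -> R) (cells : list (nat * nat)) (X : config -> R) : R :=
  match cells with
  | [] => X (fun _ _ => false)
  | (s, i) :: cs =>
      (1 - p i) * Exp p cs (fun z => X (upd z s i true))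
      + p i * Exp p cs (fun z => X (upd z s i false))
  end.

Definition cells (l t : nat) : list (nat * nat) :=
  flat_map (fun s => map (fun i => (s, i)) (seq 1 l)) (seq 1 t).

Definition ER_inf (l : nat) (p : nat -> R) (t : nat) : R :=
  Exp p (cells l t) (fun z => INR (Rt l None z t)).

(* P(T_n = t), where T_n = min { t : rho_{l+1}(t) = n }, source holding n packets. *)
Definition PT (l : nat) (p : nat -> R) (n t : nat) : R :=
  Exp p (cells l t)
    (fun z => if Nat.eqb (Rt l (Some n) z t) n
                 && forallb (fun s => negb (Nat.eqb (Rt l (Some n) z s) n)) (seq 0 t)
              then 1 else 0).

(* Main.v *)
Require Import Defs.
From Stdlib Require Import Reals Arith List Bool Lra Lia FunctionalExtensionality.
Import ListNotations.
Open Scope R_scope.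

Lemma upd_same z s i b b' : upd (upd z s i b') s i b = upd z s i b.
Proof.
  apply functional_extensionality; intro s'; apply functional_extensionality; intro i'.
  unfold upd. destruct (Nat.eqb s' s && Nat.eqb i' i); reflexivity.
Qed.

Lemma upd_comm z s i b s' i' b' : (s, i) <> (s', i') ->
  upd (upd z s i b) s' i' b' = upd (upd z s' i' b') s i b.
Proof.
  intro H.
  apply functional_extensionality; intro x; apply functional_extensionality; intro y.
  unfold upd.
  destruct (Nat.eqb_spec x s'); destruct (Nat.eqb_spec y i');
  destruct (Nat.eqb_spec x s); destruct (Nat.eqb_spec y i); simpl; subst; try reflexivity.
  exfalso; apply H; reflexivity.
Qed.

Definition ign (X : config -> R) (s i : nat) := forall z b, X (upd z s i b) = X z.



Lemma ign_upd X s i s' i' b' : ign X s i -> ign (fun z => X (upd z s' i' b')) s i.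
Proof.
  intros H z b.
  destruct (Nat.eq_dec s s'); destruct (Nat.eq_dec i i'); subst.
  - rewrite upd_same. reflexivity.
  - rewrite upd_comm by congruence. apply H.
  - rewrite upd_comm by congruence. apply H.
  - rewrite upd_comm by congruence. apply H.
Qed.

Lemma Exp_ext p cs X Y : (forall z, X z = Y z) -> Exp p cs X = Exp p cs Y.
Proof. intro H. f_equal. apply functional_extensionality; exact H. Qed.

Lemma Exp_const p cs c : Exp p cs (fun _ => c) = c.
Proof. induction cs as [|[s i] cs IH]; simpl; [reflexivity|]. rewrite !IH. ring. Qed.

Lemma Exp_ign_cons p s i cs X : ign X s i -> Exp p ((s,i)::cs) X = Exp p cs X.
Proof.
  intro H. simpl.
  rewrite (Exp_ext p cs (fun z => X (upd z s i true)) X) by (intro; apply H).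
  rewrite (Exp_ext p cs (fun z => X (upd z s i false)) X) by (intro; apply H).
  ring.
Qed.

Lemma Exp_lin p cs a b X Y :
  Exp p cs (fun z => a * X z + b * Y z) = a * Exp p cs X + b * Exp p cs Y.
Proof.
  revert X Y; induction cs as [|[s i] cs IH]; intros X Y; simpl; [reflexivity|].
  rewrite (IH (fun z => X (upd z s i true)) (fun z => Y (upd z s i true))).
  rewrite (IH (fun z => X (upd z s i false)) (fun z => Y (upd z s i false))).
  ring.
Qed.

Lemma Exp_add p cs X Y : Exp p cs (fun z => X z + Y z) = Exp p cs X + Exp p cs Y.
Proof.
  rewrite <- (Rmult_1_l (Exp p cs X)), <- (Rmult_1_l (Exp p cs Y)), <- Exp_lin.
  apply Exp_ext; intro; ring.
Qed.

Lemma Exp_scal p cs a X : Exp p cs (fun z => a * X z) = a * Exp p cs X.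
Proof.
  replace (a * Exp p cs X) with (a * Exp p cs X + 0 * Exp p cs X) by ring.
  rewrite <- Exp_lin. apply Exp_ext; intro; ring.
Qed.

Lemma Exp_sub p cs X Y : Exp p cs (fun z => X z - Y z) = Exp p cs X - Exp p cs Y.
Proof.
  replace (Exp p cs X - Exp p cs Y) with (1 * Exp p cs X + (-1) * Exp p cs Y) by ring.
  rewrite <- Exp_lin. apply Exp_ext; intro; ring.
Qed.

Definition pok (p : nat -> R) (cs : list (nat * nat)) :=
  forall s i, In (s, i) cs -> 0 <= p i <= 1.

Lemma pok_tl p c cs : pok p (c :: cs) -> pok p cs.
Proof. intros H s i Hi. apply (H s i). right; exact Hi. Qed.

Lemma Exp_mono p cs X Y : pok p cs -> (forall z, X z <= Y z) -> Exp p cs X <= Exp p cs Y.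
Proof.
  revert X Y; induction cs as [|[s i] cs IH]; intros X Y Hp H; simpl; [apply H|].
  assert (Hi : 0 <= p i <= 1) by (apply (Hp s i); left; reflexivity).
  pose proof (pok_tl _ _ _ Hp) as Hp'.
  pose proof (IH (fun z => X (upd z s i true)) (fun z => Y (upd z s i true)) Hp' (fun z => H _)).
  pose proof (IH (fun z => X (upd z s i false)) (fun z => Y (upd z s i false)) Hp' (fun z => H _)).
  nra.
Qed.

Lemma Exp_nonneg p cs X : pok p cs -> (forall z, 0 <= X z) -> 0 <= Exp p cs X.
Proof.
  intros Hp H. rewrite <- (Exp_const p cs 0). apply Exp_mono; auto.
Qed.

Lemma Exp_prod p cs X Y :
  (forall s i, In (s, i) cs -> ign X s i \/ ign Y s i) ->
  Exp p cs (fun z => X z * Y z) = Exp p cs X * Exp p cs Y.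
Proof.
  revert X Y; induction cs as [|[s i] cs IH]; intros X Y H; simpl; [reflexivity|].
  assert (H' : forall b, forall s' i', In (s', i') cs ->
     ign (fun z => X (upd z s i b)) s' i' \/ ign (fun z => Y (upd z s i b)) s' i').
  { intros b s' i' Hin. destruct (H s' i' (or_intror Hin)) as [h|h];
    [left|right]; apply ign_upd; exact h. }
  rewrite (IH (fun z => X (upd z s i true)) (fun z => Y (upd z s i true)) (H' true)).
  rewrite (IH (fun z => X (upd z s i false)) (fun z => Y (upd z s i false)) (H' false)).
  destruct (H s i (or_introl eq_refl)) as [h|h].
  - rewrite (Exp_ext p cs (fun z => X (upd z s i true)) X) by (intro; apply h).
    rewrite (Exp_ext p cs (fun z => X (upd z s i false)) X) by (intro; apply h).
    ring.
  - rewrite (Exp_ext p cs (fun z => Y (upd z s i true)) Y) by (intro; apply h).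
    rewrite (Exp_ext p cs (fun z => Y (upd z s i false)) Y) by (intro; apply h).
    ring.
Qed.

Lemma upd_at z s i b : upd z s i b s i = b.
Proof. unfold upd. rewrite !Nat.eqb_refl. reflexivity. Qed.

Lemma upd_other z s i b s' i' : (s', i') <> (s, i) -> upd z s i b s' i' = z s' i'.
Proof.
  intro H. unfold upd.
  destruct (Nat.eqb_spec s' s); destruct (Nat.eqb_spec i' i); subst; simpl; try reflexivity.
  exfalso; apply H; reflexivity.
Qed.

Lemma Exp_one p cs s i X f : In (s, i) cs -> (forall z, X z = f (z s i)) ->
  Exp p cs X = (1 - p i) * f true + p i * f false.
Proof.
  revert X; induction cs as [|[s' i'] cs IH]; intros X Hin H; [destruct Hin|].
  destruct (Nat.eq_dec s s'); destruct (Nat.eq_dec i i'); subst.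
  - simpl.
    rewrite (Exp_ext p cs _ (fun _ => f true)) by (intro; rewrite H, upd_at; reflexivity).
    rewrite (Exp_ext p cs (fun z => X (upd z s' i' false)) (fun _ => f false))
      by (intro; rewrite H, upd_at; reflexivity).
    rewrite !Exp_const. ring.
  - rewrite Exp_ign_cons.
    + apply IH; auto. destruct Hin as [E|E]; [inversion E; congruence|exact E].
    + intros z b. rewrite !H. rewrite upd_other by congruence. reflexivity.
  - rewrite Exp_ign_cons.
    + apply IH; auto. destruct Hin as [E|E]; [inversion E; congruence|exact E].
    + intros z b. rewrite !H. rewrite upd_other by congruence. reflexivity.
  - rewrite Exp_ign_cons.
    + apply IH; auto. destruct Hin as [E|E]; [inversion E; congruence|exact E].
    + intros z b. rewrite !H. rewrite upd_other by congruence. reflexivity.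
Qed.

Lemma Exp_ign_all p cs X : (forall s i, In (s, i) cs -> ign X s i) ->
  Exp p cs X = X (fun _ _ => false).
Proof.
  revert X; induction cs as [|[s i] cs IH]; intros X H; [reflexivity|].
  rewrite Exp_ign_cons by (apply H; left; reflexivity).
  apply IH. intros; apply H; right; auto.
Qed.

Lemma Exp_app_ign p c1 c2 X : (forall s i, In (s, i) c2 -> ign X s i) ->
  Exp p (c1 ++ c2) X = Exp p c1 X.
Proof.
  revert X; induction c1 as [|[s i] c1 IH]; intros X H; simpl.
  - apply Exp_ign_all; auto.
  - rewrite !IH; [reflexivity| |]; intros s' i' Hin; apply ign_upd; auto.
Qed.

Fixpoint sm (n : nat) (f : nat -> R) : R :=
  match n with O => 0 | S k => sm k f + f k end.

Lemma Exp_sm p cs n (F : nat -> config -> R) :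
  Exp p cs (fun z => sm n (fun k => F k z)) = sm n (fun k => Exp p cs (F k)).
Proof.
  induction n; simpl.
  - apply Exp_const.
  - rewrite Exp_add, IHn. reflexivity.
Qed.

Lemma sm_ext n f g : (forall k, (k < n)%nat -> f k = g k) -> sm n f = sm n g.
Proof. induction n; intro H; simpl; [reflexivity|]. rewrite IHn, H; auto; lia. Qed.

Lemma sm_le n f g : (forall k, (k < n)%nat -> f k <= g k) -> sm n f <= sm n g.
Proof. induction n; intro H; simpl; [lra|]. pose proof (H n ltac:(lia)). pose proof (IHn ltac:(intros; apply H; lia)). lra. Qed.

Lemma sm_nonneg n f : (forall k, (k < n)%nat -> 0 <= f k) -> 0 <= sm n f.
Proof. intro H. replace 0 with (sm n (fun _ => 0)). apply sm_le; auto. induction n; simpl; auto; rewrite IHn; [ring| intros; apply H; lia]. Qed.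

Lemma sm_add n f g : sm n (fun k => f k + g k) = sm n f + sm n g.
Proof. induction n; simpl; [ring|]. rewrite IHn; ring. Qed.

Lemma sm_scal n a f : sm n (fun k => a * f k) = a * sm n f.
Proof. induction n; simpl; [ring|]. rewrite IHn; ring. Qed.

Lemma in_cells l T s i : In (s, i) (cells l T) <-> ((1 <= s <= T)%nat /\ (1 <= i <= l)%nat).
Proof.
  unfold cells. rewrite in_flat_map. split.
  - intros [x [Hx Hy]]. apply in_map_iff in Hy. destruct Hy as [y [E Hy]].
    inversion E; subst. apply in_seq in Hx. apply in_seq in Hy. lia.
  - intros [H1 H2]. exists s. split; [apply in_seq; lia|].
    apply in_map_iff. exists i. split; [reflexivity|apply in_seq; lia].
Qed.

Lemma pok_cells l T p : (forall i, (1 <= i <= l)%nat -> 0 <= p i < 1) -> pok p (cells l T).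
Proof. intros H s i Hin. apply in_cells in Hin. pose proof (H i (proj2 Hin)). lra. Qed.

Lemma cells_S l T : cells l (S T) = cells l T ++ map (fun i => (S T, i)) (seq 1 l).
Proof.
  unfold cells. rewrite seq_S. rewrite flat_map_app. simpl. rewrite app_nil_r.
  replace (1 + T)%nat with (S T) by lia. reflexivity.
Qed.

Definition dep {B} (t : nat) (X : config -> B) :=
  forall z z', (forall s i, (s <= t)%nat -> z s i = z' s i) -> X z = X z'.

Lemma dep_ign t X s i : dep t X -> (t < s)%nat -> ign X s i.
Proof.
  intros H Hs z b. apply H. intros s' i' Hs'. apply upd_other. intro E; inversion E; lia.
Qed.

Lemma dep_mono {B} t t' (X : config -> B) : (t <= t')%nat -> dep t X -> dep t' X.
Proof. intros Ht H z z' E. apply H. intros; apply E; lia. Qed.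

Definition dep1 (s0 : nat) (X : config -> R) :=
  forall z z', (forall i, z s0 i = z' s0 i) -> X z = X z'.

Lemma dep1_ign s0 X s i : dep1 s0 X -> s <> s0 -> ign X s i.
Proof.
  intros H Hs z b. apply H. intro i'. apply upd_other. intro E; inversion E; lia.
Qed.

Lemma Exp_prod_dep p cs t X Y : dep t X -> dep1 (S t) Y ->
  Exp p cs (fun z => X z * Y z) = Exp p cs X * Exp p cs Y.
Proof.
  intros HX HY. apply Exp_prod. intros s i _.
  destruct (Nat.eq_dec s (S t)).
  - left. apply (dep_ign t); auto; lia.
  - right. apply (dep1_ign (S t)); auto.
Qed.

Lemma Exp_cells_ext p l T T' X : (T <= T')%nat -> dep T X ->
  Exp p (cells l T') X = Exp p (cells l T) X.
Proof.
  intros H HX. induction H; [reflexivity|].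
  rewrite cells_S, Exp_app_ign; auto.
  intros s i Hin. apply in_map_iff in Hin. destruct Hin as [x [E _]]. inversion E; subst.
  apply (dep_ign T); auto. lia.
Qed.

Definition zr (z : config) s i : R := if z s i then 1 else 0.

Fixpoint cnt (z : config) (k t : nat) : R :=
  match t with O => 0 | S t' => cnt z k t' + zr z (S t') k end.

Lemma zr_01 z s i : 0 <= zr z s i <= 1.
Proof. unfold zr; destruct (z s i); lra. Qed.

Lemma cnt_nonneg z k t : 0 <= cnt z k t.
Proof. induction t; simpl; [lra|]. pose proof (zr_01 z (S t) k); lra. Qed.

Lemma cnt_le_t z k t : cnt z k t <= INR t.
Proof. induction t; simpl cnt; [simpl; lra|]. rewrite S_INR. pose proof (zr_01 z (S t) k); lra. Qed.

Lemma cnt_dep k t : dep t (fun z => cnt z k t).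
Proof.
  intros z z' E. induction t; simpl; [reflexivity|].
  rewrite IHt by (intros; apply E; lia). unfold zr. rewrite E by lia. reflexivity.
Qed.

Lemma rho_dep src t i : dep t (fun z => rho src z t i).
Proof.
  intros z z' E. revert i. induction t; intro i; simpl; [reflexivity|].
  rewrite !IHt by (intros; apply E; lia). rewrite E by lia. reflexivity.
Qed.

Lemma rho_S src z t i : rho src z (S t) i =
  (rho src z t i + (if z (S t) (i - 1) && (if Nat.eqb i 2 then src_gt src (rho src z t i)
     else Nat.ltb (rho src z t i) (rho src z t (i - 1))) then 1 else 0))%nat.
Proof. reflexivity. Qed.

Lemma rho_0 src z i : rho src z 0 i = 0%nat.
Proof. reflexivity. Qed.

Lemma rho_step_le src z t i : (rho src z t i <= rho src z (S t) i <= S (rho src z t i))%nat.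
Proof. rewrite rho_S. destruct (_ && _); lia. Qed.

Lemma rho_mono src z t t' i : (t <= t')%nat -> (rho src z t i <= rho src z t' i)%nat.
Proof. induction 1; auto. pose proof (rho_step_le src z m i). lia. Qed.

Lemma rho2_cnt z t : INR (rho None z t 2) = cnt z 1 t.
Proof.
  induction t; [reflexivity|]. rewrite rho_S. simpl Nat.eqb. simpl src_gt. simpl cnt.
  rewrite <- IHt. unfold zr. replace (2-1)%nat with 1%nat by reflexivity. destruct (z (S t) 1%nat); simpl; rewrite ?plus_INR; simpl; lra.
Qed.

Lemma rho_le_prev z t k : (2 <= k)%nat -> (rho None z t (S k) <= rho None z t k)%nat.
Proof.
  intro Hk. induction t; [simpl; lia|].
  rewrite (rho_S None z t (S k)).
  replace (Nat.eqb (S k) 2) with false by (symmetry; apply Nat.eqb_neq; lia).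
  replace (S k - 1)%nat with k by lia.
  pose proof (rho_step_le None z t k).
  destruct (Nat.ltb_spec (rho None z t (S k)) (rho None z t k)); destruct (z (S t) k); simpl; lia.
Qed.

Lemma rho_le_cnt z t k : (1 <= k)%nat -> INR (rho None z t (S k)) <= cnt z k t.
Proof.
  intro Hk. induction t; [simpl; lra|]. rewrite rho_S. simpl cnt.
  replace (S k - 1)%nat with k by lia. unfold zr.
  destruct (z (S t) k); simpl andb.
  - destruct (if Nat.eqb (S k) 2 then _ else _); rewrite plus_INR; simpl; lra.
  - rewrite plus_INR; simpl; lra.
Qed.

Lemma rho_chain z t k j : (2 <= k)%nat -> (rho None z t (k + j) <= rho None z t k)%nat.
Proof.
  intro Hk. induction j; [rewrite Nat.add_0_r; lia|].
  replace (k + S j)%nat with (S (k + j)) by lia.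
  pose proof (rho_le_prev z t (k + j) ltac:(lia)). lia.
Qed.

Lemma R_le_cnt z t l m : (1 <= m <= l)%nat -> INR (rho None z t (S l)) <= cnt z m t.
Proof.
  intro H. eapply Rle_trans; [|apply (rho_le_cnt z t m); lia].
  apply le_INR. replace (S l) with (S m + (l - m))%nat by lia. apply rho_chain; lia.
Qed.

Lemma rho_fin z n t i : (2 <= i)%nat -> rho (Some n) z t i = Nat.min (rho None z t i) n.
Proof.
  intro Hi. revert t. induction i as [|i IHi]; intro t; [lia|].
  destruct (Nat.eq_dec i 1) as [E|E].
  - subst. clear IHi. induction t; [simpl; lia|].
    rewrite !rho_S. simpl Nat.eqb. simpl src_gt. rewrite IHt.
    destruct (Nat.ltb_spec (rho None z t 2) n).
    + rewrite Nat.min_l by lia. rewrite (proj2 (Nat.ltb_lt _ _) H).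
      destruct (z (S t) (2-1)%nat); simpl; lia.
    + rewrite Nat.min_r by lia. rewrite (proj2 (Nat.ltb_ge _ _) (Nat.le_refl n)).
      destruct (z (S t) (2-1)%nat); simpl; lia.
  - assert (IH : forall t, rho (Some n) z t i = Nat.min (rho None z t i) n) by (intro; apply IHi; lia).
    induction t; [simpl; lia|].
    rewrite !rho_S. replace (Nat.eqb (S i) 2) with false by (symmetry; apply Nat.eqb_neq; lia).
    replace (S i - 1)%nat with i by lia. rewrite IHt, IH.
    pose proof (rho_le_prev z t i ltac:(lia)).
    destruct (Nat.leb_spec n (rho None z t (S i))).
    + rewrite (Nat.min_r (rho None z t (S i))) by lia.
      replace (Nat.ltb n (Nat.min (rho None z t i) n)) with false
        by (symmetry; apply Nat.ltb_ge; lia).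
      destruct (z (S t) i); simpl andb; [destruct (Nat.ltb_spec (rho None z t (S i)) (rho None z t i))|]; simpl; lia.
    + rewrite (Nat.min_l (rho None z t (S i))) by lia.
      assert (E2 : Nat.ltb (rho None z t (S i)) (Nat.min (rho None z t i) n) =
                   Nat.ltb (rho None z t (S i)) (rho None z t i)).
      { destruct (Nat.ltb_spec (rho None z t (S i)) (rho None z t i));
        destruct (Nat.ltb_spec (rho None z t (S i)) (Nat.min (rho None z t i) n)); lia. }
      rewrite E2.
      destruct (z (S t) i); destruct (Nat.ltb_spec (rho None z t (S i)) (rho None z t i)); simpl; lia.
Qed.

Definition w (m : nat) (z : config) (s k : nat) : R := zr z s m - zr z s k.

Fixpoint Hstep (m k : nat) (Hp : nat -> R) (z : config) (t : nat) : R :=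
  match t with
  | O => Hp O
  | S t' => Rmax (Hstep m k Hp z t' + w m z (S t') k) (Hp (S t'))
  end.

Fixpoint Hproc (m j : nat) (z : config) : nat -> R :=
  match j with
  | O => fun t => cnt z m t - cnt z 1 t
  | S j' => Hstep m (S (S j')) (Hproc m j' z) z
  end.

Lemma H_0 m j z : Hproc m j z 0 = 0.
Proof. induction j; simpl; [lra|]. exact IHj. Qed.

Lemma H_S m j z t : Hproc m (S j) z (S t) = Rmax (Hproc m (S j) z t + w m z (S t) (S (S j))) (Hproc m j z (S t)).
Proof. reflexivity. Qed.

Lemma H_dep m j t : dep t (fun z => Hproc m j z t).
Proof.
  revert t; induction j; intros t z z' E.
  - simpl. rewrite (cnt_dep m t z z' E), (cnt_dep 1 t z z' E). reflexivity.
  - induction t.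
    + simpl. apply (IHj 0%nat); auto.
    + rewrite !H_S. rewrite IHt by (intros; apply E; lia).
      rewrite (IHj (S t) z z' E). unfold w, zr. rewrite !E by lia. reflexivity.
Qed.

Lemma H_ge_prev m j z t : Hproc m j z t <= Hproc m (S j) z t.
Proof. destruct t; simpl; [lra|]. apply Rmax_r. Qed.

Lemma det_bound m z j t :
  cnt z m t - INR (rho None z t (S (S j))) <= Hproc m j z t + INR j.
Proof.
  revert t; induction j; intro t.
  - rewrite rho2_cnt. simpl. lra.
  - induction t.
    + simpl rho. rewrite H_0. simpl cnt. pose proof (pos_INR (S j)). replace (INR 0) with 0 by reflexivity. lra.
    + rewrite rho_S. replace (Nat.eqb (S (S (S j))) 2) with false by reflexivity.
      replace (S (S (S j)) - 1)%nat with (S (S j)) by lia.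
      rewrite H_S. simpl cnt. 
      destruct (Nat.ltb_spec (rho None z t (S (S (S j)))) (rho None z t (S (S j)))) as [HLT|HGE].
      * rewrite andb_true_r.
        assert (Hc : INR (rho None z t (S (S (S j))) + (if z (S t) (S (S j)) then 1 else 0))
                     = INR (rho None z t (S (S (S j)))) + zr z (S t) (S (S j))).
        { unfold zr; destruct (z (S t) (S (S j))); rewrite plus_INR; simpl; lra. }
        rewrite Hc. unfold w.
        pose proof (Rmax_l (Hproc m (S j) z t + (zr z (S t) m - zr z (S t) (S (S j)))) (Hproc m j z (S t))).
        lra.
      * rewrite andb_false_r. rewrite Nat.add_0_r.
        pose proof (IHj (S t)) as Hj. simpl cnt in Hj.
        pose proof (rho_step_le None z t (S (S j))).
        apply le_INR in HGE. rewrite S_INR in *.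
        assert (INR (rho None z (S t) (S (S j))) <= INR (rho None z t (S (S j))) + 1).
        { pose proof (le_INR _ _ (proj2 (rho_step_le None z t (S (S j))))) as HH2. rewrite S_INR in HH2. lra. }
        pose proof (Rmax_r (Hproc m (S j) z t + w m z (S t) (S (S j))) (Hproc m j z (S t))).
        lra.
Qed.

Definition phi (p : nat -> R) (m : nat) (th : R) (k : nat) : R :=
  if Nat.eqb k m then 1 else ((1 - p m) * exp th + p m) * ((1 - p k) * exp (- th) + p k).

Fixpoint bstep (f : R) (bp : nat -> R) (t : nat) : R :=
  match t with O => bp O | S t' => f * bstep f bp t' + bp (S t') end.

Fixpoint bs (p : nat -> R) (m : nat) (th : R) (j : nat) : nat -> R :=
  match j with
  | O => fun t => phi p m th 1 ^ t
  | S j' => bstep (phi p m th (S (S j'))) (bs p m th j')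
  end.

Lemma geo_bound (s : nat -> R) f Q : 0 <= f < 1 -> 0 <= Q -> s O <= Q ->
  (forall t, s (S t) <= f * s t + Q) -> forall t, s t <= Q / (1 - f).
Proof.
  intros Hf HQ H0 HS.
  assert (Q <= Q / (1 - f)).
  { apply Rmult_le_reg_r with (1 - f); [lra|]. unfold Rdiv. rewrite Rmult_assoc, Rinv_l by lra. nra. }
  induction t; [lra|].
  eapply Rle_trans; [apply HS|].
  apply Rle_trans with (f * (Q / (1 - f)) + Q); [nra|].
  right. field. lra.
Qed.

Lemma exp_Rmax_le th a b : exp (th * Rmax a b) <= exp (th * a) + exp (th * b).
Proof.
  unfold Rmax; destruct (Rle_dec a b); pose proof (exp_pos (th * a)); pose proof (exp_pos (th * b)); lra.
Qed.

Lemma x_le_exp th x : 0 < th -> x <= exp (th * x) / th.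
Proof.
  intro Hth. apply Rmult_le_reg_r with th; [lra|].
  unfold Rdiv. rewrite Rmult_assoc, Rinv_l by lra. rewrite Rmult_1_r.
  destruct (Rle_dec 0 (th * x)).
  - destruct (Req_dec (th*x) 0). rewrite H, exp_0. lra.
    pose proof (exp_ineq1 (th * x) ltac:(lra)). lra.
  - pose proof (exp_pos (th * x)). lra.
Qed.

Section Part1.
Variable l : nat.
Variable p : nat -> R.
Variable m : nat.
Hypothesis Hp : forall i, (1 <= i <= l)%nat -> 0 <= p i < 1.
Hypothesis Hm : (1 <= m <= l)%nat.
Variable th : R.
Hypothesis Hphi : forall k, (1 <= k <= l)%nat -> k <> m -> 0 <= phi p m th k < 1.

Lemma phi_m : phi p m th m = 1.
Proof. unfold phi. rewrite Nat.eqb_refl. reflexivity. Qed.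

Lemma phi_range k : (1 <= k <= l)%nat -> 0 <= phi p m th k <= 1.
Proof.
  intro Hk. destruct (Nat.eq_dec k m). subst; rewrite phi_m; lra.
  pose proof (Hphi k Hk n); lra.
Qed.

Lemma E_zr T s i : (1 <= s <= T)%nat -> (1 <= i <= l)%nat ->
  Exp p (cells l T) (fun z => zr z s i) = 1 - p i.
Proof.
  intros Hs Hi. rewrite (Exp_one p _ s i _ (fun b => if b then 1 else 0)).
  - ring.
  - apply in_cells; auto.
  - intro; reflexivity.
Qed.

Lemma E_cnt T k t : (t <= T)%nat -> (1 <= k <= l)%nat ->
  Exp p (cells l T) (fun z => cnt z k t) = INR t * (1 - p k).
Proof.
  intros Ht Hk. induction t.
  - simpl. rewrite Exp_const. ring.
  - simpl cnt. rewrite Exp_add, IHt by lia. rewrite E_zr by lia. rewrite S_INR. ring.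
Qed.

Lemma E_w T s k : (1 <= s <= T)%nat -> (1 <= k <= l)%nat ->
  Exp p (cells l T) (fun z => exp (th * w m z s k)) = phi p m th k.
Proof.
  intros Hs Hk. destruct (Nat.eq_dec k m).
  - subst. rewrite phi_m. rewrite (Exp_ext _ _ _ (fun _ => 1)). apply Exp_const.
    intro z. unfold w. replace (th * (zr z s m - zr z s m)) with 0 by ring. apply exp_0.
  - rewrite (Exp_ext _ _ _ (fun z => exp (th * zr z s m) * exp (- th * zr z s k))).
    2:{ intro z. rewrite <- exp_plus. f_equal. unfold w. ring. }
    rewrite Exp_prod.
    + rewrite (Exp_one p _ s m _ (fun b => exp (th * if b then 1 else 0))); [|apply in_cells; lia|reflexivity].
      rewrite (Exp_one p _ s k _ (fun b => exp (- th * if b then 1 else 0))); [|apply in_cells; lia|reflexivity].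
      unfold phi. replace (Nat.eqb k m) with false by (symmetry; apply Nat.eqb_neq; auto).
      rewrite !Rmult_1_r, !Rmult_0_r, exp_0. replace (-th*1) with (-th) by ring. ring.
    + intros s' i' _.
      destruct (Nat.eq_dec s' s); destruct (Nat.eq_dec i' m); subst.
      * right. intros z b. unfold zr. rewrite (upd_other z s m b s k) by congruence. reflexivity.
      * left. intros z b. unfold zr. rewrite upd_other by congruence. reflexivity.
      * left. intros z b. unfold zr. rewrite upd_other by congruence. reflexivity.
      * left. intros z b. unfold zr. rewrite upd_other by congruence. reflexivity.
Qed.

Lemma w_dep1 s k : dep1 s (fun z => exp (th * w m z s k)).
Proof. intros z z' E. unfold w, zr. rewrite !E. reflexivity. Qed.

Lemma E_H0 T t : (t <= T)%nat ->
  Exp p (cells l T) (fun z => exp (th * Hproc m 0 z t)) = phi p m th 1 ^ t.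
Proof.
  intro Ht. induction t.
  - simpl. rewrite Rminus_0_r, Rmult_0_r, exp_0. apply Exp_const.
  - simpl Hproc. simpl cnt.
    rewrite (Exp_ext _ _ _ (fun z => exp (th * (cnt z m t - cnt z 1 t)) * exp (th * w m z (S t) 1))).
    2:{ intro z. rewrite <- exp_plus. f_equal. unfold w. ring. }
    rewrite (Exp_prod_dep p _ t).
    + simpl in IHt. rewrite IHt by lia. rewrite E_w by lia. simpl. ring.
    + intros z z' E. rewrite (cnt_dep m t z z' E), (cnt_dep 1 t z z' E). reflexivity.
    + apply w_dep1.
Qed.

Lemma phi_nonneg k : (1 <= k <= l)%nat -> 0 <= phi p m th k.
Proof. intro; pose proof (phi_range k H); lra. Qed.

Lemma bs_nonneg j t : (S j <= l)%nat -> 0 <= bs p m th j t.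
Proof.
  revert t; induction j; intros t Hj; simpl.
  - apply pow_le. apply phi_nonneg; lia.
  - induction t; simpl; [apply IHj; lia|].
    pose proof (phi_nonneg (S (S j)) ltac:(lia)). pose proof (IHj (S t) ltac:(lia)). nra.
Qed.

Lemma E_H j T t : (S j <= l)%nat -> (t <= T)%nat ->
  Exp p (cells l T) (fun z => exp (th * Hproc m j z t)) <= bs p m th j t.
Proof.
  revert t; induction j; intros t Hj Ht.
  - rewrite E_H0 by lia. simpl. lra.
  - induction t.
    + simpl. apply IHj; lia.
    + eapply Rle_trans.
      { apply Exp_mono; [apply pok_cells; auto|]. intro z. rewrite H_S. apply exp_Rmax_le. }
      rewrite Exp_add.
      rewrite (Exp_ext _ _ (fun z => exp (th * (Hproc m (S j) z t + w m z (S t) (S (S j)))))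
                          (fun z => exp (th * Hproc m (S j) z t) * exp (th * w m z (S t) (S (S j))))).
      2:{ intro z. rewrite <- exp_plus. f_equal. ring. }
      rewrite (Exp_prod_dep p _ t).
      2:{ intros z z' E. rewrite (H_dep m (S j) t z z' E). reflexivity. }
      2:{ apply w_dep1. }
      rewrite E_w by lia. simpl bs.
      pose proof (IHt ltac:(lia)) as E1.
      change (bs p m th (S j) t) with (bstep (phi p m th (S (S j))) (bs p m th j) t) in E1.
      pose proof (IHj (S t) ltac:(lia) Ht) as E2.
      pose proof (phi_nonneg (S (S j)) ltac:(lia)) as E3.
      apply Rplus_le_compat; [|exact E2]. rewrite Rmult_comm. apply Rmult_le_compat_l; auto.
Qed.

Lemma bstep_one bp t : bstep 1 bp t = sm (S t) bp.
Proof. induction t; simpl; [ring|]. rewrite IHt. simpl. ring. Qed.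

Lemma bstep_sum f bp N : sm (S (S N)) (bstep f bp) = f * sm (S N) (bstep f bp) + sm (S (S N)) bp.
Proof.
  induction N.
  - simpl. ring.
  - change (sm (S (S (S N))) (bstep f bp)) with (sm (S (S N)) (bstep f bp) + bstep f bp (S (S N))).
    rewrite IHN at 1.
    change (sm (S (S N)) (bstep f bp)) with (sm (S N) (bstep f bp) + bstep f bp (S N)).
    change (sm (S (S (S N))) bp) with (sm (S (S N)) bp + bp (S (S N))).
    change (bstep f bp (S (S N))) with (f * bstep f bp (S N) + bp (S (S N))).
    ring.
Qed.

Lemma bs_sum_bound j : (S j < m)%nat -> exists P, forall N, sm (S N) (bs p m th j) <= P.
Proof.
  induction j; intro Hj.
  - assert (Hf : 0 <= phi p m th 1 < 1) by (apply Hphi; lia).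
    exists (1 / (1 - phi p m th 1)). intro N.
    apply (geo_bound (fun N => sm (S N) (bs p m th 0)) (phi p m th 1) 1); auto; try lra.
    + simpl. lra.
    + intro t. change (sm (S (S t)) (bs p m th 0)) with (sm (S t) (bs p m th 0) + phi p m th 1 ^ (S t)).
      assert (sm (S t) (bs p m th 0) = sm (S t) (fun k => phi p m th 1 ^ k)) by reflexivity.
      clear H. induction t.
      * simpl. lra.
      * change (sm (S (S t)) (bs p m th 0)) with (sm (S t) (bs p m th 0) + phi p m th 1 ^ (S t)) in *.
        simpl (phi p m th 1 ^ S (S t)) in *. simpl (phi p m th 1 ^ S t) in *. nra.
  - destruct (IHj ltac:(lia)) as [P HP].
    assert (Hf : 0 <= phi p m th (S (S j)) < 1) by (apply Hphi; lia).
    assert (HP0 : 0 <= P) by (eapply Rle_trans; [|apply (HP O)]; simpl; pose proof (bs_nonneg j 0 ltac:(lia)); lra).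
    exists (P / (1 - phi p m th (S (S j)))). intro N.
    apply (geo_bound (fun N => sm (S N) (bs p m th (S j))) (phi p m th (S (S j))) P); auto.
    + simpl. pose proof (HP O). simpl in H. lra.
    + intro t. simpl bs. rewrite bstep_sum. pose proof (HP (S t)). nra.
Qed.

Lemma pow_le1 x n : 0 <= x <= 1 -> x ^ n <= 1.
Proof. intro H. induction n; simpl; [lra|]. pose proof (pow_le x n (proj1 H)). nra. Qed.

Lemma bs_bound j : (S j <= l)%nat -> exists M, forall t, bs p m th j t <= M.
Proof.
  induction j; intro Hj.
  - exists 1. intro t. simpl. apply pow_le1. apply phi_range; lia.
  - destruct (Nat.eq_dec (S (S j)) m) as [E|E].
    + destruct (bs_sum_bound j ltac:(lia)) as [P HP]. exists P. intro t.
      simpl bs. rewrite E, phi_m, bstep_one. apply HP.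
    + destruct (IHj ltac:(lia)) as [M HM].
      assert (Hf : 0 <= phi p m th (S (S j)) < 1) by (apply Hphi; lia; auto).
      assert (HM0 : 0 <= M) by (eapply Rle_trans; [apply (bs_nonneg j 0); lia|apply HM]).
      exists (M / (1 - phi p m th (S (S j)))). intro t.
      apply (geo_bound (bs p m th (S j)) (phi p m th (S (S j))) M); auto.
      * simpl. apply HM.
      * intro t'. simpl. pose proof (HM (S t')). lra.
Qed.

End Part1.

Lemma delta_exists l (p : nat -> R) m :
  (forall i, (1 <= i <= l)%nat -> i <> m -> p i < p m) ->
  exists d, 0 < d /\ forall i, (1 <= i <= l)%nat -> i <> m -> p i <= p m - d.
Proof.
  intro H.
  assert (forall L, exists d, 0 < d /\ forall i, (i <= L)%nat -> (1 <= i <= l)%nat -> i <> m -> p i <= p m - d).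
  { induction L.
    - exists 1. split; [lra|]. intros; lia.
    - destruct IHL as [d [Hd Hi]].
      destruct (Nat.le_gt_cases 1 (S L)); [|lia].
      destruct (Nat.le_gt_cases (S L) l) as [Hl|Hl].
      + destruct (Nat.eq_dec (S L) m) as [E|E].
        * exists d. split; auto. intros i Hi1 Hi2 Hi3. destruct (Nat.eq_dec i (S L)); [subst; congruence|].
          apply Hi; auto; lia.
        * pose proof (H (S L) ltac:(lia) E).
          exists (Rmin d (p m - p (S L))). split; [apply Rmin_glb_lt; lra|].
          intros i Hi1 Hi2 Hi3. pose proof (Rmin_l d (p m - p (S L))). pose proof (Rmin_r d (p m - p (S L))).
          destruct (Nat.eq_dec i (S L)); [subst; lra|].
          pose proof (Hi i ltac:(lia) Hi2 Hi3). lra.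
      + exists d. split; auto. intros i Hi1 Hi2 Hi3. apply Hi; auto; lia. }
  destruct (H0 l) as [d [Hd Hi]]. exists d. split; auto. intros; apply Hi; auto; lia.
Qed.

Lemma phi_lt1 pk pm d x : 0 <= pk -> pm < 1 -> 0 < d -> pk <= pm - d -> x = 1 + d / 2 ->
  0 <= ((1 - pm) * x + pm) * ((1 - pk) * / x + pk) < 1.
Proof.
  intros H1 H2 H3 H4 Hx.
  assert (Hx1 : 1 < x) by lra.
  set (a := 1 - pm). set (B := 1 - pk).
  assert (Ha : 0 < a) by (unfold a; lra).
  assert (HB : B <= 1) by (unfold B; lra).
  assert (HBa : d <= B - a) by (unfold a, B; lra).
  assert (Hpm : 0 <= pm) by lra.
  split.
  - apply Rmult_le_pos. nra. assert (0 < / x) by (apply Rinv_0_lt_compat; lra). nra.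
  - assert (K : a * x * (1 - B) < B * (1 - a)).
    { assert (a * (1 - B) <= 1) by nra. rewrite Hx.
      assert (0 <= a * (1 - B)) by nra. nra. }
    replace pm with (1 - a) by (unfold a; ring). replace pk with (1 - B) by (unfold B; ring).
    replace (1 - (1 - a)) with a by ring.
    apply Rmult_lt_reg_r with x; [lra|].
    replace ((a * x + (1 - a)) * (B * / x + (1 - B)) * x) with ((a * x + (1 - a)) * (B + (1 - B) * x))
      by (field; lra).
    nra.
Qed.

Lemma Rabs_le_between a C : 0 <= a <= C -> Rabs a <= C.
Proof. intro H. rewrite Rabs_right by lra. lra. Qed.

Theorem theta_exists (l : nat) (p : nat -> R) (m : nat) :
  (1 <= l)%nat ->
  (forall i, (1 <= i <= l)%nat -> 0 <= p i < 1) ->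
  (1 <= m <= l)%nat ->
  (forall i, (1 <= i <= l)%nat -> i <> m -> p i < p m) ->
  exists th, 0 < th /\ (forall k, (1 <= k <= l)%nat -> k <> m -> 0 <= phi p m th k < 1).
Proof.
  intros Hl Hp Hm Hlt.
  destruct (delta_exists l p m Hlt) as [d [Hd Hdi]].
  exists (ln (1 + d / 2)). split.
  - rewrite <- ln_1. apply ln_increasing; lra.
  - intros k Hk Hkm. unfold phi. replace (Nat.eqb k m) with false by (symmetry; apply Nat.eqb_neq; auto).
    rewrite exp_Ropp, exp_ln by lra.
    apply (phi_lt1 (p k) (p m) d); auto.
    + apply Hp; auto.
    + apply Hp; auto.
Qed.

Lemma ER_upper l p m t : (forall i, (1 <= i <= l)%nat -> 0 <= p i < 1) -> (1 <= m <= l)%nat ->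
  ER_inf l p t <= INR t * (1 - p m).
Proof.
  intros Hp Hm. unfold ER_inf, Rt.
  rewrite <- (E_cnt l p m Hm t m t) by lia.
  apply Exp_mono; [apply pok_cells; auto|]. intro z. apply R_le_cnt; lia.
Qed.

Lemma ER_lower l p m th M t : (1 <= l)%nat -> (forall i, (1 <= i <= l)%nat -> 0 <= p i < 1) ->
  (1 <= m <= l)%nat -> 0 < th ->
  (forall k, (1 <= k <= l)%nat -> k <> m -> 0 <= phi p m th k < 1) ->
  (forall t, bs p m th (l - 1) t <= M) ->
  INR t * (1 - p m) - ER_inf l p t <= M / th + INR (l - 1).
Proof.
  intros Hl Hp Hm Hth Hphi HM. unfold ER_inf, Rt.
  rewrite <- (E_cnt l p m Hm t m t) by lia.
  rewrite <- Exp_sub.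
  apply Rle_trans with (Exp p (cells l t) (fun z => / th * exp (th * Hproc m (l - 1) z t) + INR (l-1) * 1)).
  { apply Exp_mono; [apply pok_cells; auto|]. intro z.
    pose proof (det_bound m z (l - 1) t) as D. replace (S (S (l - 1))) with (S l) in D by lia.
    pose proof (x_le_exp th (Hproc m (l - 1) z t) Hth) as XL.
    unfold Rdiv in XL. lra. }
  rewrite Exp_lin, Exp_const.
  pose proof (E_H l p m Hp Hm th Hphi (l - 1) t t ltac:(lia) ltac:(lia)).
  pose proof (HM t).
  assert (0 < / th) by (apply Rinv_0_lt_compat; lra).
  unfold Rdiv. nra.
Qed.

Theorem part1_main (l : nat) (p : nat -> R) (m : nat) :
  (1 <= l)%nat ->
  (forall i, (1 <= i <= l)%nat -> 0 <= p i < 1) ->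
  (1 <= m <= l)%nat ->
  (forall i, (1 <= i <= l)%nat -> i <> m -> p i < p m) ->
  exists C : R, forall t : nat, Rabs ((1 - p m) * INR t - ER_inf l p t) <= C.
Proof.
  intros Hl Hp Hm Hlt.
  destruct (theta_exists l p m Hl Hp Hm Hlt) as [th [Hth Hphi]].
  destruct (bs_bound l p m Hm th Hphi (l - 1) ltac:(lia)) as [M HM].
  exists (M / th + INR (l - 1)). intro t.
  apply Rabs_le_between. split.
  - pose proof (ER_upper l p m t Hp Hm). lra.
  - pose proof (ER_lower l p m th M t Hl Hp Hm Hth Hphi HM). lra.
Qed.

Definition Ind (b : bool) : R := if b then 1 else 0.

Lemma Ind_01 b : 0 <= Ind b <= 1.
Proof. destruct b; simpl; lra. Qed.

Fixpoint cntn (z : config) (k t : nat) : nat :=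
  match t with O => O | S t' => (cntn z k t' + if z (S t') k then 1 else 0)%nat end.

Lemma cnt_cntn z k t : cnt z k t = INR (cntn z k t).
Proof.
  induction t; [reflexivity|]. simpl cnt; simpl cntn. rewrite plus_INR, IHt. unfold zr.
  destruct (z (S t) k); reflexivity.
Qed.

Lemma cntn_le z k t : (cntn z k t <= t)%nat.
Proof. induction t; simpl; [lia|]. destruct (z (S t) k); lia. Qed.

Lemma cntn_dep k t : dep t (fun z => cntn z k t).
Proof.
  intros z z' E. induction t; simpl; [reflexivity|].
  rewrite IHt by (intros; apply E; lia). rewrite E by lia. reflexivity.
Qed.

Lemma sm_swap n M (F : nat -> nat -> R) :
  sm n (fun t => sm M (fun L => F t L)) = sm M (fun L => sm n (fun t => F t L)).
Proof.
  induction n; simpl.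
  - induction M; simpl; [reflexivity|]. rewrite <- IHM. ring.
  - rewrite IHn. rewrite <- sm_add. reflexivity.
Qed.

Lemma sm_tri n (G : nat -> nat -> R) :
  sm n (fun t => sm (S t) (fun u => G t u)) =
  sm n (fun u => sm n (fun t => if Nat.leb u t then G t u else 0)).
Proof.
  induction n; [reflexivity|].
  change (sm (S n) (fun t => sm (S t) (fun u => G t u)))
    with (sm n (fun t => sm (S t) (fun u => G t u)) + sm (S n) (fun u => G n u)).
  rewrite IHn.
  change (sm (S n) (fun u => sm (S n) (fun t => if Nat.leb u t then G t u else 0)))
    with (sm n (fun u => sm (S n) (fun t => if Nat.leb u t then G t u else 0))
          + sm (S n) (fun t => if Nat.leb n t then G t n else 0)).
  rewrite (sm_ext n (fun u => sm (S n) (fun t => if Nat.leb u t then G t u else 0))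
             (fun u => sm n (fun t => if Nat.leb u t then G t u else 0) + G n u)).
  2:{ intros k Hk. simpl. replace (Nat.leb k n) with true by (symmetry; apply Nat.leb_le; lia). reflexivity. }
  rewrite sm_add.
  change (sm (S n) (fun t => if Nat.leb n t then G t n else 0))
    with (sm n (fun t => if Nat.leb n t then G t n else 0) + (if Nat.leb n n then G n n else 0)).
  rewrite (sm_ext n (fun t => if Nat.leb n t then G t n else 0) (fun _ => 0)).
  2:{ intros k Hk. replace (Nat.leb n k) with false by (symmetry; apply Nat.leb_gt; lia). reflexivity. }
  assert (Z : forall k, sm k (fun _ => 0) = 0) by (induction k; simpl; [ring|rewrite IHk; ring]).
  rewrite Z. rewrite Nat.leb_refl. change (sm (S n) (fun u => G n u)) with (sm n (fun u => G n u) + G n n). change (fun u => G n u) with (G n). ring.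
Qed.

Lemma exits z k N L :
  sm N (fun t => Ind (Nat.eqb (cntn z k t) L) * zr z (S t) k) = Ind (Nat.ltb L (cntn z k N)).
Proof.
  induction N; [reflexivity|].
  simpl sm. rewrite IHN. simpl cntn. unfold zr, Ind.
  destruct (z (S N) k); destruct (Nat.eqb_spec (cntn z k N) L); destruct (Nat.ltb_spec L (cntn z k N));
    destruct (Nat.ltb_spec L (cntn z k N + 1)); destruct (Nat.ltb_spec L (cntn z k N + 0)); try lra; lia.
Qed.

Section Levels.
Variable l : nat.
Variable p : nat -> R.
Variable m : nat.
Hypothesis Hp : forall i, (1 <= i <= l)%nat -> 0 <= p i < 1.
Hypothesis Hm : (1 <= m <= l)%nat.

Let A := 1 - p m.
Lemma A_pos : 0 < A.
Proof. unfold A. pose proof (Hp m Hm). lra. Qed.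

Lemma E_times_z N t X : (t < N)%nat -> dep t X ->
  Exp p (cells l N) (fun z => X z * zr z (S t) m) = Exp p (cells l N) X * A.
Proof.
  intros Ht HX. rewrite (Exp_prod_dep p _ t); auto.
  - rewrite (E_zr l p); auto; lia.
  - intros z z' E. unfold zr. rewrite E. reflexivity.
Qed.

Lemma level_time N u L X : dep u X -> (forall z, 0 <= X z) ->
  sm (S N) (fun t => if Nat.leb u t then Exp p (cells l N) (fun z => X z * Ind (Nat.eqb (cntn z m t) L)) else 0)
  <= Exp p (cells l N) X * (/ A + 1).
Proof.
  intros HX Hpos.
  pose proof A_pos as HA.
  assert (Hpk : pok p (cells l N)) by (apply pok_cells; auto).
  assert (E1 : A * sm N (fun t => if Nat.leb u t then Exp p (cells l N) (fun z => X z * Ind (Nat.eqb (cntn z m t) L)) else 0)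
               <= Exp p (cells l N) X).
  { rewrite <- sm_scal.
    rewrite (sm_ext N _ (fun t => Exp p (cells l N) (fun z => (if Nat.leb u t then X z * Ind (Nat.eqb (cntn z m t) L) else 0) * zr z (S t) m))).
    2:{ intros t Ht. destruct (Nat.leb_spec u t).
        - rewrite E_times_z; auto; [ring|].
          intros z z' E. rewrite (HX z z') by (intros; apply E; lia). rewrite (cntn_dep m t z z' E). reflexivity.
        - rewrite (Exp_ext _ _ _ (fun _ => 0)) by (intro; ring). rewrite Exp_const. ring. }
    rewrite <- Exp_sm. apply Exp_mono; auto. intro z.
    apply Rle_trans with (X z * sm N (fun t => Ind (Nat.eqb (cntn z m t) L) * zr z (S t) m)).
    - rewrite <- sm_scal. apply sm_le. intros t _. destruct (Nat.leb u t).
      + right; ring.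
      + rewrite Rmult_0_l. pose proof (Hpos z). pose proof (Ind_01 (Nat.eqb (cntn z m t) L)). pose proof (zr_01 z (S t) m). apply Rmult_le_pos; [lra|]. apply Rmult_le_pos; lra.
    - rewrite exits. pose proof (Hpos z). pose proof (Ind_01 (Nat.ltb L (cntn z m N))). nra. }
  simpl sm.
  assert (E2 : (if Nat.leb u N then Exp p (cells l N) (fun z => X z * Ind (Nat.eqb (cntn z m N) L)) else 0)
               <= Exp p (cells l N) X).
  { destruct (Nat.leb u N).
    - apply Exp_mono; auto. intro z. pose proof (Hpos z). pose proof (Ind_01 (Nat.eqb (cntn z m N) L)). nra.
    - apply Exp_nonneg; auto. }
  assert (E3 : sm N (fun t => if Nat.leb u t then Exp p (cells l N) (fun z => X z * Ind (Nat.eqb (cntn z m t) L)) else 0)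
               <= Exp p (cells l N) X * / A).
  { apply Rmult_le_reg_l with A; auto. replace (A * (Exp p (cells l N) X * / A)) with (Exp p (cells l N) X) by (field; lra). lra. }
  lra.
Qed.

End Levels.

Lemma sm_shift N g : sm (S N) g = g O + sm N (fun t => g (S t)).
Proof. induction N; simpl in *; [ring|]. rewrite IHN. ring. Qed.

Lemma sm_zero N : sm N (fun _ => 0) = 0.
Proof. induction N; simpl; [ring|rewrite IHN; ring]. Qed.

Section Ulev.
Variable l : nat.
Variable p : nat -> R.
Variable m : nat.
Hypothesis Hp : forall i, (1 <= i <= l)%nat -> 0 <= p i < 1.
Hypothesis Hm : (1 <= m <= l)%nat.
Variable th : R.
Hypothesis Hth : 0 < th.
Hypothesis Hphi : forall k, (1 <= k <= l)%nat -> k <> m -> 0 <= phi p m th k < 1.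

Let A := 1 - p m.

Definition Ulev N j L := sm (S N) (fun t => Exp p (cells l N)
   (fun z => Ind (Nat.eqb (cntn z m t) L) * exp (th * Hproc m j z t))).

Lemma pk N : pok p (cells l N).
Proof. apply pok_cells; auto. Qed.

Lemma Ulev_nonneg N j L : 0 <= Ulev N j L.
Proof.
  apply sm_nonneg. intros. apply Exp_nonneg; [apply pk|]. intro z.
  pose proof (Ind_01 (Nat.eqb (cntn z m k) L)). pose proof (exp_pos (th * Hproc m j z k)). nra.
Qed.

Lemma level_time0 N L :
  sm (S N) (fun t => Exp p (cells l N) (fun z => Ind (Nat.eqb (cntn z m t) L))) <= / A + 1.
Proof.
  pose proof (level_time l p m Hp Hm N 0 L (fun _ => 1)) as LT.
  rewrite Exp_const in LT.
  rewrite (sm_ext _ _ (fun t => if Nat.leb 0 t then Exp p (cells l N) (fun z => 1 * Ind (Nat.eqb (cntn z m t) L)) else 0)).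
  - unfold A. replace (/ (1 - p m) + 1) with (1 * (/ (1 - p m) + 1)) by ring. apply LT.
    + intros z z' _; reflexivity.
    + intro; lra.
  - intros k _. simpl. apply Exp_ext. intro; ring.
Qed.

Lemma U_m1 N L : m = 1%nat -> Ulev N 0 L <= / A + 1.
Proof.
  intro E. unfold Ulev. eapply Rle_trans; [|apply (level_time0 N L)].
  apply Req_le, sm_ext. intros k _. apply Exp_ext. intro z. simpl. rewrite E.
  replace (th * (cnt z 1 k - cnt z 1 k)) with 0 by ring. rewrite exp_0. ring.
Qed.

Lemma exp_H_m_sum j z t : S (S j) = m ->
  exp (th * Hproc m (S j) z t) <= sm (S t) (fun u => exp (th * Hproc m j z u)).
Proof.
  intro E. induction t.
  - simpl. lra.
  - rewrite H_S. eapply Rle_trans; [apply exp_Rmax_le|].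
    unfold w. rewrite E. replace (Hproc m (S j) z t + (zr z (S t) m - zr z (S t) m)) with (Hproc m (S j) z t) by ring.
    change (sm (S (S t)) (fun u => exp (th * Hproc m j z u))) with
      (sm (S t) (fun u => exp (th * Hproc m j z u)) + exp (th * Hproc m j z (S t))).
    lra.
Qed.

Lemma U_m j : S (S j) = m -> exists P, forall N L, Ulev N (S j) L <= (/ A + 1) * P.
Proof.
  intro E. destruct (bs_sum_bound l p m Hm th Hphi j ltac:(lia)) as [P HP].
  exists P. intros N' L'. unfold Ulev.
  eapply Rle_trans.
  { apply sm_le. intros t _. apply Exp_mono; [apply pk|]. intro z.
    apply Rmult_le_compat_l; [apply Ind_01|]. apply (exp_H_m_sum j z t E). }
  rewrite (sm_ext (S N') _ (fun t => sm (S t) (fun u => Exp p (cells l N') (fun z => exp (th * Hproc m j z u) * Ind (Nat.eqb (cntn z m t) L'))))).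
  2:{ intros t _. rewrite <- Exp_sm. apply Exp_ext. intro z. rewrite <- sm_scal. apply sm_ext. intros; ring. }
  rewrite sm_tri.
  eapply Rle_trans.
  { apply sm_le. intros u _. apply (level_time l p m Hp Hm N' u L' (fun z => exp (th * Hproc m j z u))).
    - intros z z' EE. rewrite (H_dep m j u z z' EE). reflexivity.
    - intro; apply Rlt_le, exp_pos. }
  rewrite (sm_ext _ _ (fun u => (/ (1 - p m) + 1) * Exp p (cells l N') (fun z => exp (th * Hproc m j z u)))) by (intros; ring).
  rewrite sm_scal. apply Rmult_le_compat_l.
  - assert (HA0 : 0 < A) by (unfold A; pose proof (Hp m Hm); lra). pose proof (Rinv_0_lt_compat _ HA0). lra.
  - eapply Rle_trans; [|apply (HP N')]. apply sm_le. intros u Hu.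
    apply (E_H l p m Hp Hm th Hphi j N' u); lia.
Qed.

End Ulev.

Lemma Exp_two p l N s m k (f g : bool -> R) : (1 <= s <= N)%nat -> (1 <= m <= l)%nat -> (1 <= k <= l)%nat -> k <> m ->
  Exp p (cells l N) (fun z => f (z s m) * g (z s k)) =
  ((1 - p m) * f true + p m * f false) * ((1 - p k) * g true + p k * g false).
Proof.
  intros Hs Hm Hk E.
  rewrite Exp_prod.
  - rewrite (Exp_one p _ s m _ f); [|apply in_cells; lia|reflexivity].
    rewrite (Exp_one p _ s k _ g); [|apply in_cells; lia|reflexivity]. reflexivity.
  - intros s' i' _.
    destruct (Nat.eq_dec s' s); destruct (Nat.eq_dec i' m); subst.
    + right. intros z b. rewrite (upd_other z s m b s k) by congruence. reflexivity.
    + left. intros z b. rewrite upd_other by congruence. reflexivity.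
    + left. intros z b. rewrite upd_other by congruence. reflexivity.
    + left. intros z b. rewrite upd_other by congruence. reflexivity.
Qed.

Lemma div_nonneg a b : 0 <= a -> 0 < b -> 0 <= a / b.
Proof. intros. unfold Rdiv. apply Rmult_le_pos; [lra|]. apply Rlt_le, Rinv_0_lt_compat; lra. Qed.

Section Step.
Variable l : nat.
Variable p : nat -> R.
Variable m : nat.
Hypothesis Hp : forall i, (1 <= i <= l)%nat -> 0 <= p i < 1.
Hypothesis Hm : (1 <= m <= l)%nat.
Variable th : R.
Hypothesis Hth : 0 < th.
Hypothesis Hphi : forall k, (1 <= k <= l)%nat -> k <> m -> 0 <= phi p m th k < 1.

Let A := 1 - p m.

Lemma pathwise j z t L :
  let k := S (S j) in
  Ind (Nat.eqb (cntn z m (S t)) L) * exp (th * Hproc m (S j) z (S t)) <=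
  Ind (Nat.eqb (cntn z m t) L) * exp (th * Hproc m (S j) z t) * ((1 - zr z (S t) m) * exp (- th * zr z (S t) k))
  + Ind (Nat.eqb (S (cntn z m t)) L) * exp (th * Hproc m (S j) z t) * (zr z (S t) m * exp (th * (1 - zr z (S t) k)))
  + Ind (Nat.eqb (cntn z m (S t)) L) * exp (th * Hproc m j z (S t)).
Proof.
  intro k. rewrite H_S.
  pose proof (exp_Rmax_le th (Hproc m (S j) z t + w m z (S t) (S (S j))) (Hproc m j z (S t))) as E1.
  rewrite Rmult_plus_distr_l, exp_plus in E1.
  pose proof (Ind_01 (Nat.eqb (cntn z m (S t)) L)) as I1.
  assert (E2 : Ind (Nat.eqb (cntn z m (S t)) L) * (exp (th * Hproc m (S j) z t) * exp (th * w m z (S t) (S (S j))))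
     = Ind (Nat.eqb (cntn z m t) L) * exp (th * Hproc m (S j) z t) * ((1 - zr z (S t) m) * exp (- th * zr z (S t) k))
     + Ind (Nat.eqb (S (cntn z m t)) L) * exp (th * Hproc m (S j) z t) * (zr z (S t) m * exp (th * (1 - zr z (S t) k)))).
  { unfold w, k. simpl cntn. unfold zr. destruct (z (S t) m).
    - rewrite Nat.add_1_r. replace (th * (1 - (if z (S t) (S (S j)) then 1 else 0)))
        with (th * (1 - (if z (S t) (S (S j)) then 1 else 0))) by reflexivity. ring.
    - rewrite Nat.add_0_r. replace (th * (0 - (if z (S t) (S (S j)) then 1 else 0)))
        with (- th * (if z (S t) (S (S j)) then 1 else 0)) by ring. ring. }
  rewrite <- E2.
  pose proof (exp_pos (th * Hproc m j z (S t))).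
  nra.
Qed.


Lemma U_ineq j N L : (S (S j) <= l)%nat -> S (S j) <> m ->
  let k := S (S j) in
  let psi := (1 - p k) * exp (- th) + p k in
  Ulev l p m th N (S j) L <=
    Ind (Nat.eqb 0 L) + p m * psi * Ulev l p m th N (S j) L
    + A * exp th * psi * (match L with O => 0 | S L' => Ulev l p m th N (S j) L' end)
    + Ulev l p m th N j L.
Proof.
  intros Hk Hkm k psi.
  assert (Hpk : pok p (cells l N)) by (apply pok_cells; auto).
  set (g := fun L t => Exp p (cells l N) (fun z => Ind (Nat.eqb (cntn z m t) L) * exp (th * Hproc m (S j) z t))).
  set (g' := fun L t => Exp p (cells l N) (fun z => Ind (Nat.eqb (S (cntn z m t)) L) * exp (th * Hproc m (S j) z t))).
  set (zz := fun t => Exp p (cells l N) (fun z => Ind (Nat.eqb (cntn z m t) L) * exp (th * Hproc m j z t))).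
  assert (Hg : forall L, Ulev l p m th N (S j) L = sm (S N) (g L)) by reflexivity.
  assert (Hz : Ulev l p m th N j L = sm (S N) zz) by reflexivity.
  assert (g_nonneg : forall L t, 0 <= g L t).
  { intros L0 t. apply Exp_nonneg; auto. intro z. pose proof (Ind_01 (Nat.eqb (cntn z m t) L0)).
    pose proof (exp_pos (th * Hproc m (S j) z t)). nra. }
  assert (zz_nonneg : forall t, 0 <= zz t).
  { intros t. apply Exp_nonneg; auto. intro z. pose proof (Ind_01 (Nat.eqb (cntn z m t) L)).
    pose proof (exp_pos (th * Hproc m j z t)). nra. }
  assert (step : forall t, (t < N)%nat -> g L (S t) <= p m * psi * g L t + A * exp th * psi * g' L t + zz (S t)).
  { intros t Ht. unfold g at 1.
    eapply Rle_trans; [apply Exp_mono; [exact Hpk|]; intro z; apply (pathwise j z t L)|].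
    rewrite !Exp_add.
    rewrite (Exp_prod_dep p _ t (fun z => Ind (Nat.eqb (cntn z m t) L) * exp (th * Hproc m (S j) z t))
              (fun z => (1 - zr z (S t) m) * exp (- th * zr z (S t) (S (S j))))).
    2:{ intros z z' E. rewrite (cntn_dep m t z z' E), (H_dep m (S j) t z z' E). reflexivity. }
    2:{ intros z z' E. unfold zr. rewrite !E. reflexivity. }
    rewrite (Exp_prod_dep p _ t (fun z => Ind (Nat.eqb (S (cntn z m t)) L) * exp (th * Hproc m (S j) z t))
              (fun z => zr z (S t) m * exp (th * (1 - zr z (S t) (S (S j)))))).
    2:{ intros z z' E. rewrite (cntn_dep m t z z' E), (H_dep m (S j) t z z' E). reflexivity. }
    2:{ intros z z' E. unfold zr. rewrite !E. reflexivity. }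
    assert (EA : Exp p (cells l N) (fun z => (1 - zr z (S t) m) * exp (- th * zr z (S t) (S (S j)))) = p m * psi).
    { set (f := fun b : bool => 1 - (if b then 1 else 0)).
      set (g0 := fun b : bool => exp (- th * (if b then 1 else 0))).
      transitivity (((1 - p m) * f true + p m * f false) * ((1 - p (S (S j))) * g0 true + p (S (S j)) * g0 false)).
      - etransitivity; [|apply (Exp_two p l N (S t) m (S (S j)) f g0); lia]. apply Exp_ext; intro; reflexivity.
      - unfold f, g0, psi, k.
        replace (- th * 1) with (- th) by ring. replace (-th * 0) with 0 by ring. rewrite exp_0. ring. }
    assert (EB : Exp p (cells l N) (fun z => zr z (S t) m * exp (th * (1 - zr z (S t) (S (S j))))) = A * exp th * psi).
    { set (f := fun b : bool => if b then 1 else 0).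
      set (g0 := fun b : bool => exp (th * (1 - if b then 1 else 0))).
      transitivity (((1 - p m) * f true + p m * f false) * ((1 - p (S (S j))) * g0 true + p (S (S j)) * g0 false)).
      - etransitivity; [|apply (Exp_two p l N (S t) m (S (S j)) f g0); lia]. apply Exp_ext; intro; reflexivity.
      - unfold f, g0, psi, k, A.
        replace (th * (1 - 1)) with 0 by ring. replace (th * (1 - 0)) with th by ring. rewrite exp_0.
        assert (exp th * exp (- th) = 1) by (rewrite <- exp_plus; replace (th + - th) with 0 by ring; apply exp_0).
        replace (1 - (1 - p m)) with (p m) by ring.
        transitivity ((1 - p m) * ((1 - p (S (S j))) * (exp th * exp (- th)) + p (S (S j)) * exp th)).
        + rewrite H. ring.
        + ring. }
    rewrite EA, EB. unfold zz, g, g'.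
    apply Req_le. ring. }
  rewrite (Hg L) at 1. rewrite sm_shift.
  assert (g0 : g L O = Ind (Nat.eqb 0 L)).
  { unfold g. rewrite (Exp_ext _ _ _ (fun _ => Ind (Nat.eqb 0 L))). apply Exp_const.
    intro z. simpl cntn. rewrite H_0, Rmult_0_r, exp_0. ring. }
  rewrite g0.
  assert (S1 : sm N (fun t => g L (S t)) <= p m * psi * sm N (g L) + A * exp th * psi * sm N (g' L) + sm N (fun t => zz (S t))).
  { rewrite <- !sm_scal, <- !sm_add. apply sm_le. intros t Ht. apply step; auto. }
  assert (S2 : sm N (g L) <= sm (S N) (g L)) by (simpl; pose proof (g_nonneg L N); lra).
  assert (S3 : sm N (fun t => zz (S t)) <= Ulev l p m th N j L) by (rewrite Hz, sm_shift; pose proof (zz_nonneg 0%nat); lra).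
  assert (S4 : sm N (g' L) <= match L with O => 0 | S L' => Ulev l p m th N (S j) L' end).
  { destruct L as [|L'].
    - right. unfold g'. rewrite (sm_ext N _ (fun _ => 0)); [apply sm_zero|].
      intros t _. rewrite (Exp_ext _ _ _ (fun _ => 0)); [apply Exp_const|]. intro; simpl. ring.
    - rewrite Hg. eapply Rle_trans; [|apply (Rle_trans _ (sm N (g L')) _ (Rle_refl _)); simpl; pose proof (g_nonneg L' N); lra].
      right. apply sm_ext. intros t _. unfold g', g. apply Exp_ext. intro z. reflexivity. }
  assert (Hpsi : 0 <= psi).
  { unfold psi. pose proof (Hp k ltac:(unfold k; lia)). pose proof (exp_pos (- th)). nra. }
  assert (0 <= p m) by (pose proof (Hp m Hm); lra).
  assert (0 <= A) by (unfold A; pose proof (Hp m Hm); lra).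
  assert (0 < exp th) by apply exp_pos.
  assert (0 <= p m * psi) by nra.
  assert (0 <= A * exp th * psi) by (apply Rmult_le_pos; [nra|lra]).

  rewrite <- Hg in S2. pose proof (Rmult_le_compat_l _ _ _ H2 S2). pose proof (Rmult_le_compat_l _ _ _ H3 S4). lra.
Qed.


Lemma U_step j : (S (S j) <= l)%nat -> S (S j) <> m -> forall K, 0 <= K ->
  exists K', forall N, (forall L, Ulev l p m th N j L <= K) -> forall L, Ulev l p m th N (S j) L <= K'.
Proof.
  intros Hk Hkm K HK.
  set (k := S (S j)). set (psi := (1 - p k) * exp (- th) + p k).
  set (a1 := p m * psi). set (a2 := A * exp th * psi).
  assert (Hpsi : 0 <= psi).
  { unfold psi. pose proof (Hp k ltac:(unfold k; lia)). pose proof (exp_pos (- th)). nra. }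
  assert (0 <= p m) by (pose proof (Hp m Hm); lra).
  assert (0 <= A) by (unfold A; pose proof (Hp m Hm); lra).
  assert (0 < exp th) by apply exp_pos.
  assert (Ha1 : 0 <= a1) by (unfold a1; nra).
  assert (Ha2 : 0 <= a2) by (unfold a2; apply Rmult_le_pos; [nra|lra]).
  assert (Hsum : a1 + a2 < 1).
  { pose proof (Hphi k ltac:(unfold k; lia) Hkm) as HH. unfold phi in HH.
    replace (Nat.eqb k m) with false in HH by (symmetry; apply Nat.eqb_neq; auto).
    unfold a1, a2, psi, A. fold A. unfold A in *. lra. }
  set (Q := (1 + K) / (1 - a1)). set (r := a2 / (1 - a1)).
  assert (Hr : 0 <= r < 1).
  { unfold r. split. apply div_nonneg; lra.
    apply Rmult_lt_reg_r with (1 - a1); [lra|]. unfold Rdiv. rewrite Rmult_assoc, Rinv_l by lra. lra. }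
  assert (HQ : 0 <= Q) by (unfold Q; apply div_nonneg; lra).
  exists (Q / (1 - r)). intros N HN L.
  apply (geo_bound (fun L => Ulev l p m th N (S j) L) r Q); auto.
  - pose proof (U_ineq j N 0 Hk Hkm) as U0. simpl in U0. fold k psi a1 in U0.
    pose proof (HN 0%nat).
    unfold Q. apply Rmult_le_reg_r with (1 - a1); [lra|]. unfold Rdiv. rewrite Rmult_assoc, Rinv_l by lra.
    unfold a1 in *. lra.
  - intro L0. pose proof (U_ineq j N (S L0) Hk Hkm) as U1. simpl in U1. fold k psi a1 a2 in U1.
    pose proof (HN (S L0)).
    assert (E : (1 - a1) * Ulev l p m th N (S j) (S L0) <= a2 * Ulev l p m th N (S j) L0 + (1 + K)).
    { unfold a1, a2 in *. lra. }
    apply Rmult_le_reg_l with (1 - a1); [lra|].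
    unfold r, Q. replace ((1 - a1) * (a2 / (1 - a1) * Ulev l p m th N (S j) L0 + (1 + K) / (1 - a1)))
      with (a2 * Ulev l p m th N (S j) L0 + (1 + K)) by (field; lra).
    lra.
Qed.

Lemma U_final : exists K, forall N L, Ulev l p m th N (l - 1) L <= K.
Proof.
  assert (base : exists K, forall N L, Ulev l p m th N (m - 1) L <= K).
  { destruct (Nat.eq_dec m 1) as [E|E].
    - exists (/ A + 1). intros N L. replace (m - 1)%nat with 0%nat by lia.
      apply (U_m1 l p m Hp Hm th); auto.
    - destruct (U_m l p m Hp Hm th Hphi (m - 2) ltac:(lia)) as [P HP].
      exists ((/ (1 - p m) + 1) * P). intros N L. replace (m - 1)%nat with (S (m - 2)) by lia. apply HP. }
  assert (ind : forall d, (m - 1 + d <= l - 1)%nat -> exists K, forall N L, Ulev l p m th N (m - 1 + d) L <= K).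
  { induction d; intro Hd.
    - rewrite Nat.add_0_r. exact base.
    - destruct (IHd ltac:(lia)) as [K HK].
      assert (HK0 : 0 <= K) by (eapply Rle_trans; [apply (Ulev_nonneg l p m Hp th 0 (m - 1 + d) 0)|apply HK]).
      destruct (U_step (m - 1 + d) ltac:(lia) ltac:(lia) K HK0) as [K' HK'].
      exists K'. intros N L. replace (m - 1 + S d)%nat with (S (m - 1 + d)) by lia.
      apply HK'. intro; apply HK. }
  destruct (ind (l - m)%nat ltac:(lia)) as [K HK]. exists K. intros N L.
  replace (l - 1)%nat with (m - 1 + (l - m))%nat by lia. apply HK.
Qed.

End Step.

Lemma sm_ge_term M f k : (forall i, (i < M)%nat -> 0 <= f i) -> (k < M)%nat -> f k <= sm M f.
Proof.
  induction M; intros Hf Hk; [lia|]. simpl.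
  destruct (Nat.eq_dec k M).
  - subst. pose proof (sm_nonneg M f ltac:(intros; apply Hf; lia)). lra.
  - pose proof (IHM ltac:(intros; apply Hf; lia) ltac:(lia)). pose proof (Hf M ltac:(lia)). lra.
Qed.

Lemma sm_Ind_eq M L0 : sm M (fun L => Ind (Nat.eqb L0 L)) = if Nat.ltb L0 M then 1 else 0.
Proof.
  induction M; [reflexivity|]. simpl sm. rewrite IHM. unfold Ind.
  destruct (Nat.eqb_spec L0 M); destruct (Nat.ltb_spec L0 M); destruct (Nat.ltb_spec L0 (S M)); try lra; lia.
Qed.

Lemma geo_sum q a M : sm M (fun L => if Nat.leb a L then q ^ (L - a) else 0) * (1 - q) =
  if Nat.leb a M then 1 - q ^ (M - a) else 0.
Proof.
  induction M.
  - destruct a; simpl; ring.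
  - simpl sm. rewrite Rmult_plus_distr_r, IHM.
    destruct (Nat.leb_spec a M); destruct (Nat.leb_spec a (S M)); try lia.
    + replace (S M - a)%nat with (S (M - a)) by lia. simpl. ring.
    + replace a with (S M) by lia. rewrite Nat.sub_diag. simpl. ring.
    + ring.
Qed.

Lemma geo_sum_le q a M : 0 <= q < 1 -> sm M (fun L => if Nat.leb a L then q ^ (L - a) else 0) <= / (1 - q).
Proof.
  intro Hq. pose proof (geo_sum q a M) as G.
  apply Rmult_le_reg_r with (1 - q); [lra|]. rewrite G, Rinv_l by lra.
  destruct (Nat.leb a M); [pose proof (pow_le q (M - a) (proj1 Hq)); lra|lra].
Qed.

Lemma exp_mul_INR x n : exp (x * INR n) = exp x ^ n.
Proof.
  induction n; simpl pow; [rewrite Rmult_0_r; apply exp_0|].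
  rewrite S_INR, Rmult_plus_distr_l, Rmult_1_r, exp_plus, IHn. ring.
Qed.

Lemma min_identity z k N n : sm N (fun t => Ind (Nat.ltb (cntn z k t) n) * zr z (S t) k) = INR (Nat.min (cntn z k N) n).
Proof.
  induction N; [reflexivity|].
  simpl sm. rewrite IHN. simpl cntn. unfold Ind, zr.
  destruct (z (S N) k); destruct (Nat.ltb_spec (cntn z k N) n).
  - rewrite Nat.min_l by lia. rewrite Nat.min_l by lia. rewrite plus_INR. simpl. ring.
  - rewrite Nat.min_r by lia. rewrite Nat.min_r by lia. ring.
  - rewrite Nat.add_0_r. ring.
  - rewrite Nat.add_0_r. ring.
Qed.

Section Count.
Variable l : nat.
Variable p : nat -> R.
Variable m : nat.
Hypothesis Hl : (1 <= l)%nat.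
Hypothesis Hp : forall i, (1 <= i <= l)%nat -> 0 <= p i < 1.
Hypothesis Hm : (1 <= m <= l)%nat.
Variable th : R.
Hypothesis Hth : 0 < th.
Hypothesis Hphi : forall k, (1 <= k <= l)%nat -> k <> m -> 0 <= phi p m th k < 1.

Let A := 1 - p m.

Definition Qinf N n t := Exp p (cells l N) (fun z => Ind (Nat.ltb (rho None z t (S l)) n)).

Lemma level_strict N L : A * sm N (fun t => Exp p (cells l N) (fun z => Ind (Nat.eqb (cntn z m t) L))) <= 1.
Proof.
  assert (Hpk : pok p (cells l N)) by (apply pok_cells; auto).
  rewrite <- sm_scal.
  rewrite (sm_ext N _ (fun t => Exp p (cells l N) (fun z => Ind (Nat.eqb (cntn z m t) L) * zr z (S t) m))).
  2:{ intros t Ht. rewrite (E_times_z l p m Hm N t); auto; [unfold A; ring|].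
      intros z z' E. rewrite (cntn_dep m t z z' E). reflexivity. }
  rewrite <- Exp_sm. rewrite <- (Exp_const p (cells l N) 1). apply Exp_mono; auto. intro z.
  rewrite exits. apply Ind_01.
Qed.

Lemma pathwise_count N n t z : (t < N)%nat ->
  let c := (n + (l - 1))%nat in
  Ind (Nat.ltb (rho None z t (S l)) n) <=
  sm c (fun L => Ind (Nat.eqb (cntn z m t) L))
  + sm (S N) (fun L => if Nat.leb c L then exp (- th) ^ (L - c) * (Ind (Nat.eqb (cntn z m t) L) * exp (th * Hproc m (l - 1) z t)) else 0).
Proof.
  intros Ht c.
  assert (P2 : 0 <= sm (S N) (fun L => if Nat.leb c L then exp (- th) ^ (L - c) * (Ind (Nat.eqb (cntn z m t) L) * exp (th * Hproc m (l - 1) z t)) else 0)).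
  { apply sm_nonneg. intros k _. destruct (Nat.leb c k); [|lra].
    pose proof (pow_le (exp (-th)) (k - c) (Rlt_le _ _ (exp_pos _))). pose proof (Ind_01 (Nat.eqb (cntn z m t) k)).
    pose proof (exp_pos (th * Hproc m (l - 1) z t)). apply Rmult_le_pos; [lra|]. apply Rmult_le_pos; lra. }
  rewrite sm_Ind_eq.
  destruct (Nat.ltb_spec (cntn z m t) c); [pose proof (Ind_01 (Nat.ltb (rho None z t (S l)) n)); lra|].
  destruct (Nat.ltb_spec (rho None z t (S l)) n) as [HR|HR]; [|unfold Ind at 1; lra].
  simpl Ind. set (L0 := cntn z m t).
  pose proof (cntn_le z m t) as HL0.
  eapply Rle_trans; [|apply Rplus_le_compat_l; apply (sm_ge_term (S N) _ L0)].
  - simpl. rewrite (proj2 (Nat.leb_le c L0) ltac:(lia)). rewrite Nat.eqb_refl. simpl Ind.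
    rewrite Rmult_1_l. rewrite <- exp_mul_INR.
    rewrite <- exp_plus.
    pose proof (det_bound m z (l - 1) t) as D. replace (S (S (l - 1))) with (S l) in D by lia.
    rewrite cnt_cntn in D. fold L0 in D.
    assert (INR (rho None z t (S l)) + 1 <= INR n) by (rewrite <- S_INR; apply le_INR; lia).
    assert (INR (L0 - c) = INR L0 - INR n - INR (l - 1)) by (rewrite minus_INR by lia; unfold c; rewrite plus_INR; ring).
    assert (0 <= - th * INR (L0 - c) + th * Hproc m (l - 1) z t) by nra.
    destruct (Req_dec (- th * INR (L0 - c) + th * Hproc m (l - 1) z t) 0) as [E|E].
    + rewrite E, exp_0. lra.
    + pose proof (exp_ineq1 (- th * INR (L0 - c) + th * Hproc m (l - 1) z t) ltac:(lra)). lra.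
  - intros k _. destruct (Nat.leb c k); [|lra].
    pose proof (pow_le (exp (-th)) (k - c) (Rlt_le _ _ (exp_pos _))). pose proof (Ind_01 (Nat.eqb L0 k)).
    pose proof (exp_pos (th * Hproc m (l - 1) z t)). apply Rmult_le_pos; [lra|]. apply Rmult_le_pos; lra.
  - lia.
Qed.


Lemma Q_upper : exists C2, 0 <= C2 /\ forall n N, sm N (fun t => Qinf N n t) <= INR n / A + C2.
Proof.
  destruct (U_final l p m Hp Hm th Hphi) as [K HK].
  assert (HK0 : 0 <= K) by (eapply Rle_trans; [apply (Ulev_nonneg l p m Hp th 0 (l - 1) 0)|apply HK]).
  assert (HA : 0 < A) by (unfold A; pose proof (Hp m Hm); lra).
  set (q := exp (- th)).
  assert (Hq : 0 <= q < 1).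
  { unfold q. split; [apply Rlt_le, exp_pos|]. rewrite <- exp_0. apply exp_increasing. lra. }
  exists (INR (l - 1) / A + K * / (1 - q)). split.
  { apply Rplus_le_le_0_compat. apply div_nonneg; auto; apply pos_INR.
    apply Rmult_le_pos; auto. apply Rlt_le, Rinv_0_lt_compat; lra. }
  intros n N.
  assert (Hpk : pok p (cells l N)) by (apply pok_cells; auto).
  set (c := (n + (l - 1))%nat).
  set (coef := fun L => if Nat.leb c L then q ^ (L - c) else 0).
  assert (Hcoef : forall L, 0 <= coef L).
  { intro L. unfold coef. destruct (Nat.leb c L); [apply pow_le; lra|lra]. }
  set (E1 := fun t L => Exp p (cells l N) (fun z => Ind (Nat.eqb (cntn z m t) L))).
  set (E2 := fun t L => Exp p (cells l N) (fun z => Ind (Nat.eqb (cntn z m t) L) * exp (th * Hproc m (l - 1) z t))).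
  apply Rle_trans with (sm N (fun t => sm c (fun L => E1 t L) + sm (S N) (fun L => coef L * E2 t L))).
  { apply sm_le. intros t Ht. unfold Qinf.
    eapply Rle_trans; [apply Exp_mono; [exact Hpk|]; intro z; apply (pathwise_count N n t z Ht)|].
    rewrite Exp_add. apply Rplus_le_compat.
    - rewrite (Exp_sm p _ c (fun L z => Ind (Nat.eqb (cntn z m t) L))). apply Rle_refl.
    - rewrite (Exp_sm p _ (S N) (fun L z => if Nat.leb c L then q ^ (L - c) * (Ind (Nat.eqb (cntn z m t) L) * exp (th * Hproc m (l - 1) z t)) else 0)).
      apply Req_le, sm_ext. intros L _. unfold coef, E2. destruct (Nat.leb c L).
      + apply Exp_scal.
      + rewrite Rmult_0_l. apply Exp_const. }
  rewrite sm_add. rewrite (sm_swap N c (fun t L => E1 t L)). rewrite (sm_swap N (S N) (fun t L => coef L * E2 t L)).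
  replace (INR n / A + (INR (l - 1) / A + K * / (1 - q))) with ((INR n / A + INR (l - 1) / A) + K * / (1 - q)) by ring.
  apply Rplus_le_compat.
  - apply Rle_trans with (sm c (fun _ => / A)).
    + apply sm_le. intros L _. pose proof (level_strict N L) as LS. fold E1 in LS.
      apply Rmult_le_reg_l with A; auto. rewrite Rinv_r by lra. exact LS.
    + assert (HS : forall k, sm k (fun _ => / A) = INR k * / A) by (induction k; simpl sm; [simpl; ring|rewrite IHk, S_INR; ring]).
      assert (0 <= K * / (1 - q)) by (apply Rmult_le_pos; auto; apply Rlt_le, Rinv_0_lt_compat; lra).
      rewrite HS. unfold c. rewrite plus_INR. unfold Rdiv. lra.
  - rewrite (sm_ext (S N) _ (fun L => coef L * sm N (fun t => E2 t L))) by (intros; apply sm_scal).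
    apply Rle_trans with (sm (S N) (fun L => coef L * K)).
    + apply sm_le. intros L _. apply Rmult_le_compat_l; auto.
      eapply Rle_trans; [|apply (HK N L)]. unfold Ulev. simpl sm at 2. fold (E2 N L).
      assert (0 <= E2 N L).
      { apply Exp_nonneg; auto. intro z. pose proof (Ind_01 (Nat.eqb (cntn z m N) L)). pose proof (exp_pos (th * Hproc m (l - 1) z N)). nra. }
      change (sm N (fun t => E2 t L) <= sm N (fun t => E2 t L) + E2 N L). lra.
    + rewrite (sm_ext _ _ (fun L => K * coef L)) by (intros; ring). rewrite sm_scal.
      apply Rmult_le_compat_l; auto. apply geo_sum_le; auto.
Qed.

Lemma E_exp_cnt N t : (t <= N)%nat ->
  Exp p (cells l N) (fun z => exp (- th * cnt z m t)) = (A * exp (- th) + p m) ^ t.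
Proof.
  intro Ht. induction t.
  - simpl. rewrite Rmult_0_r, exp_0. apply Exp_const.
  - simpl cnt.
    rewrite (Exp_ext _ _ _ (fun z => exp (- th * cnt z m t) * exp (- th * zr z (S t) m))).
    2:{ intro z. rewrite <- exp_plus. f_equal. ring. }
    rewrite (Exp_prod_dep p _ t).
    + rewrite IHt by lia. rewrite (Exp_one p _ (S t) m _ (fun b => exp (- th * if b then 1 else 0))).
      * simpl. rewrite Rmult_1_r, Rmult_0_r, exp_0. unfold A. ring.
      * apply in_cells; lia.
      * reflexivity.
    + intros z z' E. rewrite (cnt_dep m t z z' E). reflexivity.
    + intros z z' E. unfold zr. rewrite E. reflexivity.
Qed.

Lemma Q_lower n N : A * sm N (fun t => Qinf N n t) >= INR n - INR n * exp (th * INR n) * (A * exp (- th) + p m) ^ N.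
Proof.
  assert (Hpk : pok p (cells l N)) by (apply pok_cells; auto).
  rewrite <- sm_scal.
  rewrite (sm_ext N _ (fun t => Exp p (cells l N) (fun z => Ind (Nat.ltb (rho None z t (S l)) n) * zr z (S t) m))).
  2:{ intros t Ht. unfold Qinf. rewrite (E_times_z l p m Hm N t); auto; [unfold A; ring|].
      intros z z' E. rewrite (rho_dep None t (S l) z z' E). reflexivity. }
  rewrite <- Exp_sm.
  apply Rle_ge.
  apply Rle_trans with (Exp p (cells l N) (fun z => INR n - INR n * exp (th * INR n) * exp (- th * cnt z m N))).
  { rewrite Exp_sub, Exp_const, <- (E_exp_cnt N N) by lia. rewrite Exp_scal. lra. }
  apply Exp_mono; auto. intro z.
  apply Rle_trans with (sm N (fun t => Ind (Nat.ltb (cntn z m t) n) * zr z (S t) m)).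
  - rewrite min_identity. rewrite Rmult_assoc, <- exp_plus.
    destruct (Nat.le_gt_cases n (cntn z m N)).
    + rewrite Nat.min_r by auto. pose proof (pos_INR n). pose proof (exp_pos (th * INR n + - th * cnt z m N)). nra.
    + rewrite Nat.min_l by lia. rewrite cnt_cntn.
      assert (INR (cntn z m N) < INR n) by (apply lt_INR; auto).
      pose proof (exp_ineq1 (th * INR n + - th * INR (cntn z m N)) ltac:(nra)).
      pose proof (pos_INR (cntn z m N)). assert (HE : 1 <= exp (th * INR n + - th * INR (cntn z m N))) by nra. pose proof (Rmult_le_compat_l (INR n) _ _ (pos_INR n) HE). lra.
  - apply sm_le. intros t Ht. apply Rmult_le_compat_r; [apply zr_01|].
    unfold Ind. destruct (Nat.ltb_spec (cntn z m t) n); [|destruct (Nat.ltb _ _); lra].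
    pose proof (R_le_cnt z t l m Hm) as RL. rewrite cnt_cntn in RL. apply INR_le in RL.
    rewrite (proj2 (Nat.ltb_lt (rho None z t (S l)) n) ltac:(lia)). lra.
Qed.

End Count.

Section Fin.
Variable l : nat.
Variable p : nat -> R.
Hypothesis Hl : (1 <= l)%nat.
Hypothesis Hp : forall i, (1 <= i <= l)%nat -> 0 <= p i < 1.
Variable n : nat.

Definition Qf t := Exp p (cells l t) (fun z => Ind (Nat.ltb (Rt l (Some n) z t) n)).

Lemma Rfin_le z t : (Rt l (Some n) z t <= n)%nat.
Proof. unfold Rt. rewrite rho_fin by lia. lia. Qed.

Lemma Rfin_mono z s t : (s <= t)%nat -> (Rt l (Some n) z s <= Rt l (Some n) z t)%nat.
Proof. intro; unfold Rt; apply rho_mono; auto. Qed.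

Lemma Qf_Qinf N t : (t <= N)%nat -> Qf t = Qinf l p N n t.
Proof.
  intro H. unfold Qf, Qinf.
  rewrite (Exp_cells_ext p l t N (fun z => Ind (Nat.ltb (rho None z t (S l)) n)) H).
  2:{ intros z z' E. unfold Ind. rewrite (rho_dep None t (S l) z z' E). reflexivity. }
  apply Exp_ext. intro z. unfold Rt. rewrite rho_fin by lia. unfold Ind.
  destruct (Nat.ltb_spec (Nat.min (rho None z t (S l)) n) n); destruct (Nat.ltb_spec (rho None z t (S l)) n); try reflexivity; lia.
Qed.

Lemma PT_0 : PT l p n 0 = Ind (Nat.eqb 0 n).
Proof.
  unfold PT. simpl. unfold Rt. simpl rho. destruct n; reflexivity.
Qed.

Lemma Qf_0 : Qf 0 = Ind (Nat.ltb 0 n).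
Proof. unfold Qf. simpl. reflexivity. Qed.

Lemma PT_S t : PT l p n (S t) = Qf t - Qf (S t).
Proof.
  unfold PT, Qf.
  rewrite <- (Exp_cells_ext p l t (S t) (fun z => Ind (Nat.ltb (Rt l (Some n) z t) n))) by
    (try lia; intros z z' E; unfold Rt; rewrite (rho_dep (Some n) t (S l) z z' E); reflexivity).
  rewrite <- Exp_sub. apply Exp_ext. intro z.
  set (R := Rt l (Some n) z).
  assert (Hall : forallb (fun s => negb (Nat.eqb (R s) n)) (seq 0 (S t)) = negb (Nat.eqb (R t) n)).
  { destruct (Nat.eqb_spec (R t) n) as [E|E]; simpl negb.
    - apply Bool.not_true_is_false. intro F. rewrite forallb_forall in F.
      specialize (F t ltac:(apply in_seq; lia)). rewrite E, Nat.eqb_refl in F. discriminate.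
    - apply forallb_forall. intros s Hs. apply in_seq in Hs.
      pose proof (Rfin_mono z s t ltac:(lia)). pose proof (Rfin_le z t). fold R in H, H0.
      apply Bool.negb_true_iff, Nat.eqb_neq. lia. }
  rewrite Hall.
  pose proof (Rfin_mono z t (S t) ltac:(lia)). pose proof (Rfin_le z t). pose proof (Rfin_le z (S t)).
  fold R in H, H0, H1. unfold Ind.
  destruct (Nat.eqb_spec (R (S t)) n); destruct (Nat.eqb_spec (R t) n);
  destruct (Nat.ltb_spec (R t) n); destruct (Nat.ltb_spec (R (S t)) n); simpl; try lra; lia.
Qed.

Lemma PT_nonneg t : 0 <= PT l p n t.
Proof.
  unfold PT. apply Exp_nonneg; [apply pok_cells; auto|]. intro z. destruct (_ && _); lra.
Qed.

Lemma Qf_nonneg t : 0 <= Qf t.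
Proof. unfold Qf. apply Exp_nonneg; [apply pok_cells; auto|]. intro z. apply Ind_01. Qed.

Lemma Qf_anti t : Qf (S t) <= Qf t.
Proof. pose proof (PT_nonneg (S t)). rewrite PT_S in H. lra. Qed.

Lemma Qf_anti' s t : (s <= t)%nat -> Qf t <= Qf s.
Proof. induction 1; [lra|]. pose proof (Qf_anti m). lra. Qed.

Lemma sum_PT N : sum_f_R0 (PT l p n) N = 1 - Qf N.
Proof.
  induction N.
  - simpl. rewrite PT_0, Qf_0. unfold Ind. destruct n; simpl; ring.
  - simpl. rewrite IHN, PT_S. ring.
Qed.

Lemma sum_tPT N : sum_f_R0 (fun t => INR t * PT l p n t) N = sm N Qf - INR N * Qf N.
Proof.
  induction N.
  - simpl. ring.
  - rewrite tech5. rewrite IHN, PT_S. change (sm (S N) Qf) with (sm N Qf + Qf N). rewrite S_INR. ring.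
Qed.

Lemma sm_Qf N : sm N Qf = sm N (fun t => Qinf l p N n t).
Proof. apply sm_ext. intros. apply Qf_Qinf. lia. Qed.

Lemma sm_diff M N : (M <= N)%nat -> INR (N - M) * Qf N <= sm N Qf - sm M Qf.
Proof.
  induction 1.
  - rewrite Nat.sub_diag. simpl. lra.
  - replace (S m - M)%nat with (S (m - M)) by lia. rewrite S_INR. simpl sm.
    pose proof (Qf_anti m). pose proof (Qf_nonneg (S m)).
    assert (INR (m - M) * Qf (S m) <= INR (m - M) * Qf m) by (apply Rmult_le_compat_l; [apply pos_INR|lra]).
    pose proof (Qf_anti' M m ltac:(auto)). lra.
Qed.

End Fin.

Lemma cv_le_bound u L B : Un_cv u L -> (forall N, u N <= B) -> L <= B.
Proof.
  intros Hc HB. destruct (Rle_dec L B) as [|HLB]; auto. exfalso.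
  destruct (Hc (L - B) ltac:(lra)) as [N HN]. specialize (HN N (le_n N)). specialize (HB N).
  unfold Rdist in HN. apply Rabs_def2 in HN. lra.
Qed.

Lemma growing_le_lim u L : Un_cv u L -> (forall N, u N <= u (S N)) -> forall N, u N <= L.
Proof.
  intros Hc Hg N0. destruct (Rle_dec (u N0) L) as [|H]; auto. exfalso.
  assert (Hm : forall k, (N0 <= k)%nat -> u N0 <= u k) by (induction 1; [lra|specialize (Hg m); lra]).
  destruct (Hc (u N0 - L) ltac:(lra)) as [N HN]. specialize (HN (max N N0) (Nat.le_max_l _ _)).
  specialize (Hm (max N N0) (Nat.le_max_r _ _)). unfold Rdist in HN. apply Rabs_def2 in HN. lra.
Qed.

Theorem part2_main (l : nat) (p : nat -> R) (m : nat) :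
  (1 <= l)%nat ->
  (forall i, (1 <= i <= l)%nat -> 0 <= p i < 1) ->
  (1 <= m <= l)%nat ->
  (forall i, (1 <= i <= l)%nat -> i <> m -> p i < p m) ->
  (exists (C : R) (N : nat), forall n : nat, (N <= n)%nat ->
     infinite_sum (fun t => PT l p n t) 1 /\
     exists ET : R,
       infinite_sum (fun t => INR t * PT l p n t) ET /\
       Rabs (ET - INR n / (1 - p m)) <= C).
Proof.
  intros Hl Hp Hm Hlt.
  destruct (theta_exists l p m Hl Hp Hm Hlt) as [th [Hth Hphi]].
  destruct (Q_upper l p m Hl Hp Hm th Hth Hphi) as [C2 [HC2 HQ]].
  exists C2, 0%nat. intros n _.
  set (A := 1 - p m).
  assert (HA : 0 < A) by (unfold A; pose proof (Hp m Hm); lra).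
  set (s := fun N => sm N (Qf l p n)).
  assert (Hup : forall N, s N <= INR n / A + C2).
  { intro N. unfold s. rewrite (sm_Qf l p Hl). apply HQ. }
  set (beta := A * exp (- th) + p m).
  assert (Hlow : forall N, A * s N >= INR n - INR n * exp (th * INR n) * beta ^ N).
  { intro N. unfold s. rewrite (sm_Qf l p Hl). apply (Q_lower l p m Hl Hp Hm th Hth). }
  assert (Hgrow : forall N, s N <= s (S N)).
  { intro N. unfold s. simpl sm. pose proof (Qf_nonneg l p Hp n N). lra. }
  assert (Hub : has_ub s).
  { exists (INR n / A + C2). intros x [i Hi]. subst. apply Hup. }
  destruct (growing_cv s Hgrow Hub) as [Sinf HS].
  assert (Hbeta : Rabs beta < 1).
  { assert (exp (- th) < 1) by (rewrite <- exp_0; apply exp_increasing; lra).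
    pose proof (exp_pos (- th)). pose proof (Hp m Hm).
    rewrite Rabs_right; unfold beta; [|nra]. unfold A in *. nra. }
  assert (HSlow : INR n / A <= Sinf).
  { assert (Hk : forall eps, eps > 0 -> INR n - eps <= A * Sinf).
    { intros eps Heps.
      assert (Hc : 0 < INR n * exp (th * INR n) + 1) by (pose proof (pos_INR n); pose proof (exp_pos (th * INR n)); nra).
      destruct (pow_lt_1_zero beta Hbeta (eps / (INR n * exp (th * INR n) + 1))) as [N HN].
      { apply Rdiv_lt_0_compat; lra. }
      specialize (HN N (le_n N)).
      pose proof (Hlow N). pose proof (growing_le_lim s Sinf HS Hgrow N).
      assert (Hb : beta ^ N <= eps / (INR n * exp (th * INR n) + 1)) by (pose proof (Rle_abs (beta ^ N)); lra).
      assert (INR n * exp (th * INR n) * beta ^ N <= eps).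
      { apply Rle_trans with ((INR n * exp (th * INR n) + 1) * beta ^ N).
        - assert (0 <= beta ^ N) by (apply pow_le; unfold beta; pose proof (exp_pos (- th)); pose proof (Hp m Hm); nra).
          nra.
        - apply Rmult_le_reg_r with (/ (INR n * exp (th * INR n) + 1)). apply Rinv_0_lt_compat; lra.
          rewrite (Rmult_comm (INR n * exp (th * INR n) + 1)), Rmult_assoc, Rinv_r by lra. unfold Rdiv in Hb. lra. }
      nra. }
    assert (INR n <= A * Sinf).
    { destruct (Rle_dec (INR n) (A * Sinf)) as [|H]; auto. exfalso.
      pose proof (Hk ((INR n - A * Sinf) / 2) ltac:(lra)). lra. }
    apply Rmult_le_reg_l with A; auto. unfold Rdiv. rewrite <- Rmult_assoc, (Rmult_comm A), Rmult_assoc, Rinv_r by lra. lra. }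
  assert (HSup : Sinf <= INR n / A + C2) by (apply (cv_le_bound s); auto).
  assert (HNQ : forall eps, eps > 0 -> exists N0, forall N, (N0 <= N)%nat -> INR N * Qf l p n N < eps).
  { intros eps Heps. destruct (HS (eps / 4) ltac:(lra)) as [M0 HM0].
    exists (2 * M0 + 1)%nat. intros N HN.
    pose proof (sm_diff l p Hl Hp n M0 N ltac:(lia)) as D. fold (s N) (s M0) in D.
    pose proof (HM0 N ltac:(lia)) as E1. pose proof (HM0 M0 (le_n _)) as E2.
    unfold Rdist in E1, E2. apply Rabs_def2 in E1. apply Rabs_def2 in E2.
    assert (INR N <= 2 * INR (N - M0)) by (rewrite minus_INR by lia; assert (INR (2 * M0 + 1) <= INR N) by (apply le_INR; lia); rewrite plus_INR, mult_INR in H; simpl in H; lra).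
    pose proof (Qf_nonneg l p Hp n N).
    assert (INR N * Qf l p n N <= 2 * INR (N - M0) * Qf l p n N) by nra.
    lra. }
  split.
  - intros eps Heps. destruct (HNQ eps Heps) as [N0 HN0]. exists (S N0). intros N HN.
    unfold Rdist. rewrite (sum_PT l p Hl). specialize (HN0 N ltac:(lia)).
    pose proof (Qf_nonneg l p Hp n N).
    assert (1 <= INR N) by (apply (le_INR 1); lia).
    rewrite Rabs_left1 by lra. nra.
  - exists Sinf. split.
    + intros eps Heps. destruct (HNQ (eps / 2) ltac:(lra)) as [N0 HN0]. destruct (HS (eps / 2) ltac:(lra)) as [N1 HN1].
      exists (max N0 N1). intros N HN. unfold Rdist. rewrite (sum_tPT l p Hl).
      specialize (HN0 N ltac:(lia)). specialize (HN1 N ltac:(lia)). unfold Rdist in HN1. fold (s N).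
      apply Rabs_def2 in HN1. pose proof (Qf_nonneg l p Hp n N). pose proof (pos_INR N).
      assert (0 <= INR N * Qf l p n N) by nra.
      apply Rabs_def1; lra.
    + rewrite Rabs_right by lra. fold A. lra.
Qed.


Theorem mainTheorem8 (l : nat) (p : nat -> R) (m : nat) :
  (1 <= l)%nat ->
  (forall i, (1 <= i <= l)%nat -> 0 <= p i < 1) ->
  (1 <= m <= l)%nat ->
  (forall i, (1 <= i <= l)%nat -> i <> m -> p i < p m) ->
  let A := 1 - p m in
  (* E R_t = A t - r(t) with r bounded uniformly (unlimited source regime) *)
  (exists C : R, forall t : nat, Rabs (A * INR t - ER_inf l p t) <= C) /\
  (* E T_n = n / A + O(1) as n -> infinity *)
  (exists (C : R) (N : nat), forall n : nat, (N <= n)%nat ->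
     infinite_sum (fun t => PT l p n t) 1 /\
     exists ET : R,
       infinite_sum (fun t => INR t * PT l p n t) ET /\
       Rabs (ET - INR n / A) <= C).
Proof.
  intros Hl Hp Hm Hlt A. split.
  - apply part1_main; auto.
  - apply part2_main; auto.
Qed.
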